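(* Let $R$ be a Noetherian ring and $\Gamma$ a finitely generated group with a word metric. Declare a morphism $\phi\colon(F,\Sigma_F)\to(F',\Sigma_{F'})$ of $\mathbf{B}_\times(R[\Gamma])$ to be an admissible monomorphism if $\phi$ is injective and $s(\phi)\colon s(F,\Sigma_F)\to s(F',\Sigma_{F'})$ is boundedly bicontrolled (equivalently, $s(\phi)$ is an admissible monomorphism of $\mathbf{B}(\Gamma,R)$), and an admissible epimorphism if $s(\phi)$ is an admissible epimorphism of $\mathbf{B}(\Gamma,R)$. This choice defines an exact structure on $\mathbf{B}_\times(R[\Gamma])$, and with respect to it the functors $s\colon\mathbf{B}_\times(R[\Gamma])\to\mathbf{B}(\Gamma,R)$ and $s_\Gamma\colon\mathbf{B}_\times(R[\Gamma])\to\mathbf{B}_{\Gamma,0}(\Gamma,R)^\Gamma$ are exact.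
   Context: Notation: $S[b]$ is the metric $b$-enlargement of $S\subset\Gamma$, $x[b]$ the $b$-ball about $x$. A $\Gamma$-filtered $R$-module is an $R$-module $F$ with an inclusion-preserving assignment $S\mapsto F(S)$ of submodules to subsets of $\Gamma$, $F(\Gamma)=F$; reduced if $F(\emptyset)=0$; lean if $F(S)\subset\sum_{x\in S}F(x[D])$ for some $D$ and all $S$; insular if $F(S)\cap F(U)\subset F(S[d]\cap U[d])$ for some $d$ and all $S,U$; locally finitely generated if $F(S)$ is finitely generated for bounded $S$. A homomorphism $f\colon F\to F'$ is boundedly controlled if $f(F(S))\subset F'(S[b])$ for some $b$ and all $S$, and boundedly bicontrolled if in addition $f(F)\cap F'(S)\subset f(F(S[b]))$ for all $S$. $\mathbf{B}(\Gamma,R)$ is the exact category of reduced, lean, insular, locally finitely generated $\Gamma$-filtered $R$-modules with boundedly controlled maps, whose exact sequences are short exact sequences with both maps boundedly bicontrolled; admissible monomorphisms/epimorphisms are the first/second maps of such sequences. $\mathbf{B}_{\Gamma,0}(\Gamma,R)^\Gamma$ is the category of pairs $(F,\psi)$, $F\in\mathbf{B}(\Gamma,R)$, $\psi(\gamma)\colon F\to\gamma F$ isomorphisms (where $\gamma F$ is $F$ refiltered by left translation by $\gamma$) satisfying $\psi(1)=1$, $\psi(\gamma_1\gamma_2)=\gamma_1\psi(\gamma_2)\psi(\gamma_1)$, with $\psi(\gamma)$ and its inverse bounded by $0$; morphisms are the $\Gamma$-equivariant morphisms, and exact sequences are those exact in $\mathbf{B}(\Gamma,R)$. For a finitely generated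 $R[\Gamma]$-module $F$ with finite generating set $\Sigma$, $s(F,\Sigma)$ is the $\Gamma$-filtered module with $F(S)=$ the $R$-submodule generated by $\{s\sigma:s\in S,\sigma\in\Sigma\}$. $F$ is properly generated if $s(F,\Sigma)$ is lean and insular for some $\Sigma$. $\mathbf{B}_\times(R[\Gamma])$ is the category of pairs $(F,\Sigma)$ with $F$ properly generated and $\Sigma$ a finite generating set, morphisms being all $R[\Gamma]$-homomorphisms; it is additive with $(F,\Sigma_F)\oplus(G,\Sigma_G)=(F\oplus G,\Sigma_F\times\Sigma_G)$. The functor $s$ sends $(F,\Sigma)$ to $s(F,\Sigma)$ and a homomorphism to itself; $s_\Gamma$ sends $(F,\Sigma)$ to $(s(F,\Sigma),\psi)$ where $\psi(\gamma)$ is the equivariance structure given by the action of $\gamma$ on $F$. *)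

(* Defs.v *)
From HB Require Import structures.
From mathcomp Require Import all_boot all_algebra.

Set Implicit Arguments.
Unset Strict Implicit.
Unset Printing Implicit Defensive.

Import GRing.Theory.
Local Open Scope ring_scope.

Section Modules.
Context {R : pzRingType}.

Definition is_submod (M : lmodType R) (P : M -> Prop) : Prop :=
  [/\ P 0, (forall x y, P x -> P y -> P (x + y)) &
      (forall (a : R) x, P x -> P (a *: x))].

Definition gen_submod (M : lmodType R) (X : M -> Prop) : M -> Prop :=
  fun m => forall P, is_submod P -> (forall x, X x -> P x) -> P m.

Definition fin_gen (M : lmodType R) (P : M -> Prop) : Prop :=
  exists s : seq M, forall m, P m <-> gen_submod (fun x => x \in s) m.

End Modules.

(* left Noetherian: every left ideal of R is finitely generated *)
Definition noetherian (R : pzRingType) : Prop :=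
  forall I : R^o -> Prop, is_submod I -> fin_gen I.

Section WordMetric.
Context {G : groupType} (gens : seq G).

(* a word is a list of generators with exponent +1 (true) or -1 (false) *)
Definition word_ok (w : seq (G * bool)) : bool := all (fun p => p.1 \in gens) w.

Definition word_eval (w : seq (G * bool)) : G :=
  foldr (fun p g => ((if p.2 then p.1 else p.1^-1) * g)%g) 1%g w.

Definition generates_group : Prop :=
  forall g : G, exists w, word_ok w /\ word_eval w = g.

(* d(x,y) <= n for the word metric d(x,y) = |x^-1 y| *)
Definition dist_le (x y : G) (n : nat) : Prop :=
  exists w, [/\ word_ok w, (size w <= n)%N & (x * word_eval w)%g = y].

Definition enlarge (S : G -> Prop) (n : nat) : G -> Prop :=
  fun y => exists2 x, S x & dist_le x y n.

Definition ball (x : G) (n : nat) : G -> Prop := fun y => dist_le x y n.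

Definition bounded_set (S : G -> Prop) : Prop :=
  exists x n, forall y, S y -> dist_le x y n.

End WordMetric.

Section Filtered.
Context {R : pzRingType} {G : groupType} (gens : seq G).

Definition filtration (M : lmodType R) := (G -> Prop) -> M -> Prop.

Definition is_filtration (M : lmodType R) (F : filtration M) : Prop :=
  [/\ forall S, is_submod (F S),
      (forall S U, (forall x, S x -> U x) -> forall m, F S m -> F U m) &
      forall m, F (fun _ => True) m].

Definition reduced (M : lmodType R) (F : filtration M) : Prop :=
  forall m, F (fun _ => False) m -> m = 0.

Definition lean (M : lmodType R) (F : filtration M) : Prop :=
  exists D : nat, forall S m, F S m ->
    gen_submod (fun v => exists2 x, S x & F (ball gens x D) v) m.

Definition insular (M : lmodType R) (F : filtration M) : Prop :=
  exists d : nat, forall S U m, F S m -> F U m ->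
    F (fun y => enlarge gens S d y /\ enlarge gens U d y) m.

Definition loc_fin_gen (M : lmodType R) (F : filtration M) : Prop :=
  forall S, bounded_set gens S -> fin_gen (F S).

Definition B_obj (M : lmodType R) (F : filtration M) : Prop :=
  [/\ is_filtration F, reduced F, lean F, insular F & loc_fin_gen F].

Definition bcontrolled (M N : lmodType R) (F : filtration M) (F' : filtration N)
    (f : M -> N) : Prop :=
  exists b : nat, forall S m, F S m -> F' (enlarge gens S b) (f m).

Definition bbicontrolled (M N : lmodType R) (F : filtration M) (F' : filtration N)
    (f : M -> N) : Prop :=
  exists b : nat,
    (forall S m, F S m -> F' (enlarge gens S b) (f m)) /\
    (forall S n, (exists m, f m = n) -> F' S n ->
        exists2 m, F (enlarge gens S b) m & f m = n).

Definition B_hom (M N : lmodType R) (F : filtration M) (F' : filtration N)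
    (f : M -> N) : Prop :=
  linear f /\ bcontrolled F F' f.

Definition B_exact (A B C : lmodType R) (FA : filtration A) (FB : filtration B)
    (FC : filtration C) (i : A -> B) (p : B -> C) : Prop :=
  [/\ B_obj FA /\ B_obj FB /\ B_obj FC,
      B_hom FA FB i /\ B_hom FB FC p,
      [/\ injective i, (forall c, exists b, p b = c) &
          (forall b, p b = 0 <-> exists a, i a = b)] &
      bbicontrolled FA FB i /\ bbicontrolled FB FC p].

Definition B_adm_epi (B C : lmodType R) (FB : filtration B) (FC : filtration C)
    (p : B -> C) : Prop :=
  exists (A : lmodType R) (FA : filtration A) (i : A -> B), B_exact FA FB FC i p.

Definition translate (M : lmodType R) (F : filtration M) (g : G) : filtration M :=
  fun S => F (fun x => S (g^-1 * x)%g).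

Definition Beq_obj (M : lmodType R) (F : filtration M) (psi : G -> M -> M) : Prop :=
  [/\ B_obj F,
      (forall m, psi 1%g m = m),
      (forall g1 g2 m, psi (g1 * g2)%g m = psi g1 (psi g2 m)) &
      forall g, [/\ linear (psi g),
        (forall S m, F S m -> translate F g (enlarge gens S 0) (psi g m)) &
        exists phi : M -> M, [/\ cancel (psi g) phi, cancel phi (psi g) &
          forall S m, translate F g S m -> F (enlarge gens S 0) (phi m)]]].

Definition Beq_hom (M N : lmodType R) (F : filtration M) (psi : G -> M -> M)
    (F' : filtration N) (psi' : G -> N -> N) (f : M -> N) : Prop :=
  B_hom F F' f /\ forall g m, f (psi g m) = psi' g (f m).

Definition Beq_exact (A B C : lmodType R)
    (FA : filtration A) (psiA : G -> A -> A)
    (FB : filtration B) (psiB : G -> B -> B)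
    (FC : filtration C) (psiC : G -> C -> C) (i : A -> B) (p : B -> C) : Prop :=
  [/\ Beq_obj FA psiA, Beq_obj FB psiB, Beq_obj FC psiC,
      Beq_hom FA psiA FB psiB i /\ Beq_hom FB psiB FC psiC p &
      B_exact FA FB FC i p].

End Filtered.

Section GroupRingModules.
Context {R : pzRingType} {G : groupType} (gens : seq G).

(* an R[Gamma]-module = an R-module with an R-linear left Gamma-action *)
Definition is_action (M : lmodType R) (act : G -> M -> M) : Prop :=
  [/\ forall g, linear (act g), (forall m, act 1%g m = m) &
      forall g h m, act (g * h)%g m = act g (act h m)].

Definition sfilt (M : lmodType R) (act : G -> M -> M) (Sigma : seq M) : filtration M :=
  fun S => gen_submod (fun m => exists s, exists2 sg, sg \in Sigma & S s /\ m = act s sg).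

Definition generates_mod (M : lmodType R) (act : G -> M -> M) (Sigma : seq M) : Prop :=
  forall m, sfilt act Sigma (fun _ => True) m.

Definition properly_generated (M : lmodType R) (act : G -> M -> M) : Prop :=
  exists Sigma, [/\ generates_mod act Sigma, lean gens (sfilt act Sigma) &
                    insular gens (sfilt act Sigma)].

Record Bx_obj := BxObj {
  bx_mod : lmodType R;
  bx_act : G -> bx_mod -> bx_mod;
  bx_gens : seq bx_mod;
  bx_actP : is_action bx_act;
  bx_gensP : generates_mod bx_act bx_gens;
  bx_proper : properly_generated bx_act }.

Arguments bx_act : clear implicits.
Arguments bx_gens : clear implicits.

Definition s_filt (A : Bx_obj) : filtration (bx_mod A) := sfilt (bx_act A) (bx_gens A).
Arguments s_filt : clear implicits.

Definition Bx_hom (A B : Bx_obj) (f : bx_mod A -> bx_mod B) : Prop :=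
  linear f /\ forall g m, f (bx_act A g m) = bx_act B g (f m).

Definition Bx_adm_mono (A B : Bx_obj) (f : bx_mod A -> bx_mod B) : Prop :=
  [/\ Bx_hom f, injective f & bbicontrolled gens (s_filt A) (s_filt B) f].

Definition Bx_adm_epi (A B : Bx_obj) (f : bx_mod A -> bx_mod B) : Prop :=
  Bx_hom f /\ B_adm_epi gens (s_filt A) (s_filt B) f.

Definition Bx_is_kernel (A B C : Bx_obj) (i : bx_mod A -> bx_mod B)
    (p : bx_mod B -> bx_mod C) : Prop :=
  (forall a, p (i a) = 0) /\
  forall (X : Bx_obj) (f : bx_mod X -> bx_mod B), Bx_hom f ->
    (forall x, p (f x) = 0) ->
    exists g, [/\ Bx_hom g, (forall x, i (g x) = f x) &
      forall g', Bx_hom g' -> (forall x, i (g' x) = f x) -> forall x, g' x = g x].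

Definition Bx_is_cokernel (A B C : Bx_obj) (i : bx_mod A -> bx_mod B)
    (p : bx_mod B -> bx_mod C) : Prop :=
  (forall a, p (i a) = 0) /\
  forall (X : Bx_obj) (f : bx_mod B -> bx_mod X), Bx_hom f ->
    (forall a, f (i a) = 0) ->
    exists h, [/\ Bx_hom h, (forall b, h (p b) = f b) &
      forall h', Bx_hom h' -> (forall b, h' (p b) = f b) -> forall c, h' c = h c].

Definition Bx_kercoker (A B C : Bx_obj) (i : bx_mod A -> bx_mod B)
    (p : bx_mod B -> bx_mod C) : Prop :=
  [/\ Bx_hom i, Bx_hom p, Bx_is_kernel i p & Bx_is_cokernel i p].

Definition Bx_exact (A B C : Bx_obj) (i : bx_mod A -> bx_mod B)
    (p : bx_mod B -> bx_mod C) : Prop :=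
  [/\ Bx_kercoker i p, Bx_adm_mono i & Bx_adm_epi p].

Definition E_mono (A B : Bx_obj) (i : bx_mod A -> bx_mod B) : Prop :=
  exists (C : Bx_obj) (p : bx_mod B -> bx_mod C), Bx_exact i p.

Definition E_epi (B C : Bx_obj) (p : bx_mod B -> bx_mod C) : Prop :=
  exists (A : Bx_obj) (i : bx_mod A -> bx_mod B), Bx_exact i p.

Definition Bx_iso (A A' : Bx_obj) (f : bx_mod A -> bx_mod A') : Prop :=
  Bx_hom f /\ exists g, [/\ Bx_hom g, cancel f g & cancel g f].

Definition Bx_pushout (A B A' B' : Bx_obj) (i : bx_mod A -> bx_mod B)
    (f : bx_mod A -> bx_mod A') (i' : bx_mod A' -> bx_mod B')
    (f' : bx_mod B -> bx_mod B') : Prop :=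
  [/\ Bx_hom i' /\ Bx_hom f', (forall a, f' (i a) = i' (f a)) &
    forall (X : Bx_obj) (u : bx_mod B -> bx_mod X) (v : bx_mod A' -> bx_mod X),
      Bx_hom u -> Bx_hom v -> (forall a, u (i a) = v (f a)) ->
      exists h, [/\ Bx_hom h, (forall b, h (f' b) = u b), (forall a', h (i' a') = v a') &
        forall h', Bx_hom h' -> (forall b, h' (f' b) = u b) ->
          (forall a', h' (i' a') = v a') -> forall y, h' y = h y]].

Definition Bx_pullback (A C C' A' : Bx_obj) (p : bx_mod A -> bx_mod C)
    (f : bx_mod C' -> bx_mod C) (p' : bx_mod A' -> bx_mod C')
    (f' : bx_mod A' -> bx_mod A) : Prop :=
  [/\ Bx_hom p' /\ Bx_hom f', (forall y, p (f' y) = f (p' y)) &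
    forall (X : Bx_obj) (u : bx_mod X -> bx_mod A) (v : bx_mod X -> bx_mod C'),
      Bx_hom u -> Bx_hom v -> (forall x, p (u x) = f (v x)) ->
      exists h, [/\ Bx_hom h, (forall x, f' (h x) = u x), (forall x, p' (h x) = v x) &
        forall h', Bx_hom h' -> (forall x, f' (h' x) = u x) ->
          (forall x, p' (h' x) = v x) -> forall x, h' x = h x]].

(* Quillen's axioms (in the form of Buehler, "Exact categories", Def. 2.1)
   for the class E = Bx_exact, together with the requirement that the
   admissible monos/epis of E are exactly the declared ones. *)
Definition Bx_exact_structure : Prop :=
  [/\
    (forall (A B C A' B' C' : Bx_obj) i p i' p' a b c,
        Bx_exact (A:=A) (B:=B) (C:=C) i p ->
        Bx_kercoker (A:=A') (B:=B') (C:=C') i' p' ->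
        Bx_iso a -> Bx_iso b -> Bx_iso c ->
        (forall x, b (i x) = i' (a x)) -> (forall y, c (p y) = p' (b y)) ->
        Bx_exact i' p'),
    (forall (A B : Bx_obj) (i : bx_mod A -> bx_mod B), Bx_adm_mono i -> E_mono i) /\
    (forall (B C : Bx_obj) (p : bx_mod B -> bx_mod C), Bx_adm_epi p -> E_epi p),
    (forall A : Bx_obj, E_mono (A:=A) (B:=A) id /\ E_epi (B:=A) (C:=A) id),
    (forall (A B C : Bx_obj) (i : bx_mod A -> bx_mod B) (j : bx_mod B -> bx_mod C),
        E_mono i -> E_mono j -> E_mono (j \o i)) /\
    (forall (A B C : Bx_obj) (p : bx_mod A -> bx_mod B) (q : bx_mod B -> bx_mod C),
        E_epi p -> E_epi q -> E_epi (q \o p)) &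
    (forall (A B A' : Bx_obj) (i : bx_mod A -> bx_mod B) (f : bx_mod A -> bx_mod A'),
        E_mono i -> Bx_hom f ->
        exists (B' : Bx_obj) (i' : bx_mod A' -> bx_mod B') (f' : bx_mod B -> bx_mod B'),
          Bx_pushout i f i' f' /\ E_mono i') /\
    (forall (A C C' : Bx_obj) (p : bx_mod A -> bx_mod C) (f : bx_mod C' -> bx_mod C),
        E_epi p -> Bx_hom f ->
        exists (A' : Bx_obj) (p' : bx_mod A' -> bx_mod C') (f' : bx_mod A' -> bx_mod A),
          Bx_pullback p f p' f' /\ E_epi p')].

Definition s_exact : Prop :=
  forall (A B C : Bx_obj) (i : bx_mod A -> bx_mod B) (p : bx_mod B -> bx_mod C),
    Bx_exact i p -> B_exact gens (s_filt A) (s_filt B) (s_filt C) i p.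

(* the functor s_Gamma is exact: s_Gamma(F,Sigma) = (s(F,Sigma), action) *)
Definition sGamma_exact : Prop :=
  forall (A B C : Bx_obj) (i : bx_mod A -> bx_mod B) (p : bx_mod B -> bx_mod C),
    Bx_exact i p ->
    Beq_exact gens (s_filt A) (bx_act A) (s_filt B) (bx_act B)
                   (s_filt C) (bx_act C) i p.

End GroupRingModules.

(* Main.v *)
Require Import Defs.
From HB Require Import structures.
From mathcomp Require Import all_boot all_algebra.
From Stdlib Require Import ClassicalEpsilon FunctionalExtensionality PropExtensionality.

Set Implicit Arguments.
Unset Strict Implicit.
Unset Printing Implicit Defensive.

Import GRing.Theory.

Local Open Scope ring_scope.



Section Lin.
Context {R : pzRingType}.

Lemma lin0 (M N : lmodType R) (f : M -> N) : linear f -> f 0 = 0.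
Proof.
move=> lf; have := lf 1 0 0; rewrite scale1r addr0 scale1r => h.
by move: (congr1 (fun v => v - f 0) h); rewrite subrr addrK.
Qed.

Lemma linD (M N : lmodType R) (f : M -> N) x y : linear f -> f (x + y) = f x + f y.
Proof. by move=> lf; have := lf 1 x y; rewrite !scale1r. Qed.

Lemma linZ (M N : lmodType R) (f : M -> N) a x : linear f -> f (a *: x) = a *: f x.
Proof. by move=> lf; have := lf a x 0; rewrite !addr0 (lin0 lf) addr0. Qed.

Lemma linN (M N : lmodType R) (f : M -> N) x : linear f -> f (- x) = - f x.
Proof. by move=> lf; rewrite -scaleN1r linZ // scaleN1r. Qed.

Lemma linB (M N : lmodType R) (f : M -> N) x y : linear f -> f (x - y) = f x - f y.
Proof. by move=> lf; rewrite linD // linN. Qed.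

Lemma lin_comp (M N P : lmodType R) (f : M -> N) (g : N -> P) :
  linear f -> linear g -> linear (g \o f).
Proof. by move=> lf lg a x y /=; rewrite lf lg. Qed.

Lemma lin_id (M : lmodType R) : linear (@id M).
Proof. by []. Qed.

Lemma lin_inv (M N : lmodType R) (f : M -> N) (g : N -> M) :
  linear f -> injective f -> (forall n : N, (exists m, f m = n) -> f (g n) = n) ->
  forall a x y, (exists m, f m = x) -> (exists m, f m = y) ->
  g (a *: x + y) = a *: g x + g y.
Proof.
move=> lf fi hg a x y hx hy; apply: fi; rewrite lf !hg //.
by case: hx hy => [m <-] [m' <-]; exists (a *: m + m'); rewrite lf.
Qed.

Lemma submodB (M : lmodType R) (P : M -> Prop) x y :
  is_submod P -> P x -> P y -> P (x - y).
Proof. by case=> _ hD hZ px py; apply: hD => //; rewrite -scaleN1r; apply: hZ. Qed.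

Lemma submodN (M : lmodType R) (P : M -> Prop) x :
  is_submod P -> P x -> P (- x).
Proof. by case=> _ hD hZ px; rewrite -scaleN1r; apply: hZ. Qed.

Lemma submod_sum (M : lmodType R) (P : M -> Prop) (I : Type) (s : seq I) (F : I -> M) :
  is_submod P -> (forall i, P (F i)) -> P (\sum_(i <- s) F i).
Proof.
move=> [h0 hD hZ] hs; elim: s => [|i s IH]; first by rewrite big_nil.
by rewrite big_cons; apply: hD.
Qed.

Lemma gen_submodP (M : lmodType R) (X : M -> Prop) : is_submod (gen_submod X).
Proof.
split=> [P [h0 _ _] _ //|x y hx hy P hP hX|a x hx P hP hX].
- by case: (hP) => _ hD _; apply: hD; [apply: hx|apply: hy].
- by case: (hP) => _ _ hZ; apply: hZ; apply: hx.
Qed.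

Lemma gen_in (M : lmodType R) (X : M -> Prop) x : X x -> gen_submod X x.
Proof. by move=> hx P _ hX; apply: hX. Qed.

Lemma gen_min (M : lmodType R) (X P : M -> Prop) :
  is_submod P -> (forall x, X x -> P x) -> forall m, gen_submod X m -> P m.
Proof. by move=> hP hX m hm; apply: hm. Qed.

Lemma gen_mono (M : lmodType R) (X Y : M -> Prop) :
  (forall x, X x -> Y x) -> forall m, gen_submod X m -> gen_submod Y m.
Proof.
move=> hXY; apply: gen_min; first exact: gen_submodP.
by move=> x /hXY; apply: gen_in.
Qed.

Lemma preim_submod (M N : lmodType R) (f : M -> N) (P : N -> Prop) :
  linear f -> is_submod P -> is_submod (fun m => P (f m)).
Proof.
move=> lf [h0 hD hZ]; split; first by rewrite lin0.
- by move=> x y hx hy; rewrite linD //; apply: hD.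
- by move=> a x hx; rewrite linZ //; apply: hZ.
Qed.

Lemma img_submod (M N : lmodType R) (f : M -> N) (P : M -> Prop) :
  linear f -> is_submod P -> is_submod (fun n => exists2 m, P m & f m = n).
Proof.
move=> lf [h0 hD hZ]; split; first by exists 0 => //; rewrite lin0.
- move=> x y [m hm <-] [m' hm' <-]; exists (m + m'); first exact: hD.
  by rewrite linD.
- by move=> a x [m hm <-]; exists (a *: m); [apply: hZ | rewrite linZ].
Qed.

Lemma gen_img (M N : lmodType R) (f : M -> N) (X : M -> Prop) m :
  linear f -> gen_submod X m -> gen_submod (fun n => exists2 x, X x & f x = n) (f m).
Proof.
move=> lf; apply: (gen_min (P := fun m => gen_submod _ (f m))).
  by apply: preim_submod => //; apply: gen_submodP.
by move=> x hx; apply: gen_in; exists x.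
Qed.

Lemma gen_img_inv (M N : lmodType R) (f : M -> N) (X : M -> Prop) n :
  linear f -> gen_submod (fun n => exists2 x, X x & f x = n) n ->
  exists2 m, gen_submod X m & f m = n.
Proof.
move=> lf; apply: (gen_min (P := fun n => exists2 m, gen_submod X m & f m = n)).
  by apply: img_submod => //; apply: gen_submodP.
by move=> y [x hx <-]; exists x => //; apply: gen_in.
Qed.

End Lin.

Local Close Scope ring_scope.


Section Metric.
Context {G : groupType} (gens : seq G).
Local Open Scope group_scope.

Lemma word_eval_cat (w1 w2 : seq (G * bool)) :
  word_eval (w1 ++ w2) = word_eval w1 * word_eval w2.
Proof. by elim: w1 => [|p w IH] /=; rewrite ?mul1g // IH mulgA. Qed.

Lemma word_ok_cat (w1 w2 : seq (G * bool)) :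
  word_ok gens (w1 ++ w2) = word_ok gens w1 && word_ok gens w2.
Proof. by rewrite /word_ok all_cat. Qed.

Definition winv (w : seq (G * bool)) := rev (map (fun p => (p.1, ~~ p.2)) w).

Lemma winv_eval w : word_eval (winv w) = (word_eval w)^-1.
Proof.
elim: w => [|[g b] w IH] /=; first by rewrite /winv /= invg1.
rewrite /winv /= rev_cons -cats1 word_eval_cat -/(winv w) IH /= mulg1 invgM.
by case: b => /=; rewrite ?invgK.
Qed.

Lemma winv_ok w : word_ok gens (winv w) = word_ok gens w.
Proof.
rewrite /word_ok /winv all_rev all_map; apply: eq_all => p //.
Qed.

Lemma winv_size w : size (winv w) = size w.
Proof. by rewrite size_rev size_map. Qed.

Lemma dist_refl x : dist_le gens x x 0.
Proof. by exists [::]; rewrite /= mulg1. Qed.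

Lemma dist_mono x y n m : (n <= m)%N -> dist_le gens x y n -> dist_le gens x y m.
Proof. by move=> hnm [w [h1 h2 h3]]; exists w; split=> //; apply: leq_trans hnm. Qed.

Lemma dist_trans x y z n m :
  dist_le gens x y n -> dist_le gens y z m -> dist_le gens x z (n + m).
Proof.
move=> [w [h1 h2 h3]] [w' [h1' h2' h3']]; exists (w ++ w'); split.
- by rewrite word_ok_cat h1 h1'.
- by rewrite size_cat leq_add.
- by rewrite word_eval_cat mulgA h3 h3'.
Qed.

Lemma dist_sym x y n : dist_le gens x y n -> dist_le gens y x n.
Proof.
move=> [w [h1 h2 h3]]; exists (winv w); split.
- by rewrite winv_ok.
- by rewrite winv_size.
- by rewrite winv_eval -h3 mulgK.
Qed.

Lemma dist_mulL g x y n : dist_le gens x y n -> dist_le gens (g * x) (g * y) n.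
Proof. by move=> [w [h1 h2 h3]]; exists w; split=> //; rewrite -mulgA h3. Qed.

Lemma dist_mulL_inv g x y n : dist_le gens (g * x) (g * y) n -> dist_le gens x y n.
Proof. by move/(dist_mulL g^-1); rewrite !mulKg. Qed.

Lemma enl_self (S : G -> Prop) n x : S x -> enlarge gens S n x.
Proof. by move=> hx; exists x => //; apply: dist_mono (dist_refl x). Qed.

Lemma enl0 (S : G -> Prop) x : enlarge gens S 0 x -> S x.
Proof. by move=> [y hy [[|p w] [_ h2 h3]]] //=; rewrite /= mulg1 in h3; rewrite -h3. Qed.

Lemma enl_mono (S U : G -> Prop) n m :
  (forall x, S x -> U x) -> (n <= m)%N -> forall x, enlarge gens S n x -> enlarge gens U m x.
Proof. by move=> hSU hnm x [y /hSU hy hd]; exists y => //; apply: dist_mono hd. Qed.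

Lemma enl_enl (S : G -> Prop) n m x :
  enlarge gens (enlarge gens S n) m x -> enlarge gens S (n + m) x.
Proof. by move=> [y [z hz hzy] hyx]; exists z => //; apply: dist_trans hzy hyx. Qed.

Lemma enl_cap (S U : G -> Prop) n x :
  enlarge gens (fun y => S y /\ U y) n x -> enlarge gens S n x /\ enlarge gens U n x.
Proof. by move=> [y [hS hU] hd]; split; exists y. Qed.

End Metric.

Local Open Scope ring_scope.



Definition pb (P : Prop) : bool := if excluded_middle_informative P then true else false.
Lemma pb_spec (P : Prop) : pb P <-> P.
Proof. by rewrite /pb; case: excluded_middle_informative. Qed.

Section Filt.
Context {R : pzRingType} {G : groupType} (gens : seq G).
Hypothesis hgen : generates_group gens.

Definition fle (M : lmodType R) (F F' : @filtration R G M) (k : nat) :=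
  forall S m, F S m -> F' (enlarge gens S k) m.

Definition fmono (M : lmodType R) (F : @filtration R G M) :=
  forall S U, (forall x, S x -> U x) -> forall m, F S m -> F U m.

Lemma insular_transfer (M : lmodType R) (F F' : @filtration R G M) k1 k2 :
  fmono F' -> fle F' F k1 -> fle F F' k2 -> insular gens F -> insular gens F'.
Proof.
move=> hm h1 h2 [d hd]; exists (k1 + d + k2) => S U m hS hU.
have := h2 _ _ (hd _ _ _ (h1 _ _ hS) (h1 _ _ hU)); apply: hm => x.
move/enl_cap => [hx1 hx2]; split.
- by apply: enl_enl; apply: enl_mono hx1 => // y; apply: enl_enl.
- by apply: enl_enl; apply: enl_mono hx2 => // y; apply: enl_enl.
Qed.

Section Sfilt.
Context (M : lmodType R) (act : G -> M -> M) (Sig : seq M).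
Hypothesis hact : is_action act.

Lemma act_lin g : linear (act g). Proof. by case: hact. Qed.
Lemma act1 m : act 1%g m = m. Proof. by case: hact. Qed.
Lemma actM g h m : act (g * h)%g m = act g (act h m). Proof. by case: hact. Qed.

Lemma sfilt_submod S : is_submod (sfilt act Sig S).
Proof. exact: gen_submodP. Qed.

Lemma sfilt_mono S U : (forall x, S x -> U x) ->
  forall m, sfilt act Sig S m -> sfilt act Sig U m.
Proof.
move=> hSU; apply: gen_mono => m [s [sg hsg [hs ->]]].
by exists s, sg => //; split => //; apply: hSU.
Qed.

Lemma sfilt_fmono : fmono (sfilt act Sig).
Proof. by move=> S U; apply: sfilt_mono. Qed.

Lemma sfilt_gen S s sg : S s -> sg \in Sig -> sfilt act Sig S (act s sg).
Proof. by move=> hs hsg; apply: gen_in; exists s, sg. Qed.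

Lemma sfilt_act g S m :
  sfilt act Sig S m -> sfilt act Sig (fun y => S (g^-1 * y)%g) (act g m).
Proof.
apply: (gen_min (P := fun m => sfilt act Sig _ (act g m))).
  by apply: preim_submod; [apply: act_lin | apply: sfilt_submod].
move=> x [s [sg hsg [hs ->]]]; rewrite -actM; apply: sfilt_gen => //.
by rewrite mulgA mulVg mul1g.
Qed.

Lemma sfilt_ball m :
  sfilt act Sig (fun _ => True) m -> exists k, sfilt act Sig (ball gens 1%g k) m.
Proof.
apply: (gen_min (P := fun m => exists k, sfilt act Sig (ball gens 1%g k) m)).
  split.
  - by exists 0%N; case: (sfilt_submod (ball gens 1%g 0)).
  - move=> x y [k hk] [k' hk']; exists (maxn k k').
    case: (sfilt_submod (ball gens 1%g (maxn k k'))) => _ hD _; apply: hD.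
    + by apply: sfilt_mono hk => z; apply: dist_mono; rewrite leq_maxl.
    + by apply: sfilt_mono hk' => z; apply: dist_mono; rewrite leq_maxr.
  - move=> a x [k hk]; exists k.
    by case: (sfilt_submod (ball gens 1%g k)) => _ _ hZ; apply: hZ.
move=> x [s [sg hsg [_ ->]]]; have [w [hw hws]] := hgen s.
exists (size w); apply: sfilt_gen => //.
by exists w; split => //; rewrite mul1g.
Qed.

End Sfilt.

Lemma sfilt_control (M N : lmodType R) (actM : G -> M -> M) (actN : G -> N -> N)
    (SM : seq M) (SN : seq N) (f : M -> N) :
  is_action actM -> is_action actN -> generates_mod actN SN -> linear f ->
  (forall g m, f (actM g m) = actN g (f m)) ->
  exists k, forall S m, sfilt actM SM S m -> sfilt actN SN (enlarge gens S k) (f m).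
Proof.
move=> haM haN hgN lf hf.
have [k hk] : exists k, forall sg, sg \in SM -> sfilt actN SN (ball gens 1%g k) (f sg).
  elim: SM => [|sg SM [k hk]]; first by exists 0%N.
  have [k' hk'] := sfilt_ball (hgN (f sg)).
  exists (maxn k k') => x; rewrite inE => /orP [/eqP ->|/hk hx].
  + by apply: sfilt_mono hk' => z; apply: dist_mono; rewrite leq_maxr.
  + by apply: sfilt_mono hx => z; apply: dist_mono; rewrite leq_maxl.
exists k => S; apply: (gen_min (P := fun m => sfilt actN SN _ (f m))).
  by apply: preim_submod => //; apply: sfilt_submod.
move=> x [s [sg hsg [hs ->]]]; rewrite hf.
have h1 := sfilt_act haN (g:=s) (hk _ hsg).
apply: (sfilt_mono _ h1) => y hy.
exists s => //; apply: dist_mulL_inv (s^-1)%g _ _ _ _.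
by rewrite mulVg.
Qed.

End Filt.

Local Close Scope ring_scope.

Local Open Scope ring_scope.



Section Words.
Context {G : groupType} (gens : seq G).

Definition gb : seq (G * bool) := [seq (g, b) | g <- gens, b <- [:: true; false]].

Fixpoint allwords n : seq (seq (G * bool)) :=
  if n is n'.+1 then [::] :: [seq p :: w | p <- gb, w <- allwords n']
  else [:: [::]].

Lemma allwordsP n w : word_ok gens w -> (size w <= n)%N -> w \in allwords n.
Proof.
elim: n w => [|n IH] [|p w] //=; rewrite ?inE ?eqxx //.
move=> /andP [hp hw] hs; apply/orP; right.
  apply/allpairsP; exists (p, w); split => //=; last exact: IH.
  case: p hp {hw hs} => g b hg; apply/allpairsP; exists (g, b); split => //.
  by case: b {hg}.
Qed.

Lemma bounded_list (S : G -> Prop) :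
  bounded_set gens S -> exists L : seq G, forall y, S y -> y \in L.
Proof.
move=> [x [n hn]]; exists [seq (x * word_eval w)%g | w <- allwords n] => y /hn.
move=> [w [h1 h2 <-]]; apply/mapP; exists w => //; exact: allwordsP.
Qed.

End Words.

Section Bobj.
Context {R : pzRingType} {G : groupType} (gens : seq G).
Hypothesis hgen : generates_group gens.
Context (M : lmodType R) (act : G -> M -> M) (Sig : seq M).
Hypothesis hact : is_action act.

Lemma sfilt_reduced : reduced (sfilt act Sig).
Proof.
move=> m; apply: (gen_min (P := fun m => m = 0)).
  by split=> [//|x y -> ->|a x ->]; rewrite ?addr0 ?scaler0.
by move=> x [s [sg _ []]].
Qed.

Lemma sfilt_lean : lean gens (sfilt act Sig).
Proof.
exists 0%N => S; apply: gen_min; first exact: gen_submodP.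
move=> x [s [sg hsg [hs ->]]]; apply: gen_in; exists s => //.
by apply: sfilt_gen => //; apply: dist_refl.
Qed.

Lemma sfilt_locfin : loc_fin_gen gens (sfilt act Sig).
Proof.
move=> S /bounded_list [L hL].
exists [seq act y sg | y <- [seq y <- L | pb (S y)], sg <- Sig] => m; split.
- apply: gen_min; first exact: gen_submodP.
  move=> x [s [sg hsg [hs ->]]]; apply: gen_in; apply/allpairsP.
  exists (s, sg); split => //; rewrite mem_filter hL // andbT.
  by apply/pb_spec.
- apply: gen_min; first exact: sfilt_submod.
  move=> x /allpairsP [[y sg] [/= hy hsg ->]]; apply: sfilt_gen => //.
  by move: hy; rewrite mem_filter => /andP [/pb_spec].
Qed.

Lemma sfilt_Bobj : generates_mod act Sig -> properly_generated gens act ->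
  B_obj gens (sfilt act Sig).
Proof.
move=> hg [Sig' [hg' _ hins]]; split.
- split => //; [exact: sfilt_submod | exact: sfilt_fmono].
- exact: sfilt_reduced.
- exact: sfilt_lean.
- have [k1 h1] := sfilt_control (f := id) hgen Sig hact hact hg' (@lin_id _ _) (fun _ _ => erefl).
  have [k2 h2] := sfilt_control (f := id) hgen Sig' hact hact hg (@lin_id _ _) (fun _ _ => erefl).
  apply: (insular_transfer (k1 := k1) (k2 := k2) _ _ _ hins).
  + exact: sfilt_fmono.
  + exact: h1.
  + exact: h2.
- exact: sfilt_locfin.
Qed.

Lemma sfilt_Beq : B_obj gens (sfilt act Sig) -> Beq_obj gens (sfilt act Sig) act.
Proof.
move=> hB; split => // [m|g1 g2 m|g]; [exact: act1 | exact: actM |].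
split; first exact: act_lin.
- move=> S m hm; rewrite /translate.
  by apply: (sfilt_mono _ (sfilt_act hact (g:=g) hm)) => y hy; apply: enl_self.
- exists (act g^-1%g); split.
  + by move=> m; rewrite -actM // mulVg act1.
  + by move=> m; rewrite -actM // mulgV act1.
  + move=> S m hm; have := sfilt_act hact (g:=g^-1%g) hm.
    apply: sfilt_mono => y; rewrite invgK mulKg; exact: enl_self.
Qed.

End Bobj.

Local Close Scope ring_scope.

Local Open Scope ring_scope.



Section Quot.
Context {R : pzRingType} (M : lmodType R) (N : M -> Prop).
Hypothesis hN : is_submod N.

Definition canon (x : M) : M := epsilon (inhabits (0 : M)) (fun y => N (y - x)).

Lemma canon_spec x : N (canon x - x).
Proof.
rewrite /canon; apply: (epsilon_spec (inhabits (0 : M)) (fun y => N (y - x))).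
by exists x; rewrite subrr; case: hN.
Qed.

Lemma canon_eq x y : N (x - y) -> canon x = canon y.
Proof.
move=> hxy; rewrite /canon; congr epsilon; apply: functional_extensionality => z.
apply: propositional_extensionality; split => hz.
- have -> : z - y = (z - x) + (x - y) by rewrite addrA subrK.
  by case: hN => _ hD _; apply: hD.
- have -> : z - x = (z - y) - (x - y) by rewrite opprB addrA subrK.
  exact: submodB.
Qed.

Lemma canon_eqP x y : canon x = canon y <-> N (x - y).
Proof.
split; last exact: canon_eq.
move=> e; have := submodB hN (canon_spec y) (canon_spec x).
have -> : canon y - y - (canon x - x) = x - y by rewrite e opprB addrC addrA subrK.
by [].
Qed.

Lemma canon_idem x : canon (canon x) = canon x.
Proof. by apply: canon_eq; apply: canon_spec. Qed.

Definition quot_of (h : is_submod N) := {x : M | canon x == x}.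
Definition quot := quot_of hN.
HB.instance Definition _ := [Choice of quot by <:].

Definition qpi (x : M) : quot := exist _ (canon x) (introT eqP (canon_idem x)).

Lemma qpi_val (q : quot) : qpi (val q) = q.
Proof. by apply: val_inj => /=; case: q => x /= /eqP. Qed.

Lemma qpiP x y : qpi x = qpi y <-> N (x - y).
Proof.
rewrite -canon_eqP; split; first by move/(congr1 val).
by move=> e; apply: val_inj.
Qed.

Lemma qpi_canon x : qpi (canon x) = qpi x.
Proof. by apply/qpiP; apply: canon_spec. Qed.

Definition qzero : quot := qpi 0.
Definition qopp (q : quot) : quot := qpi (- val q).
Definition qadd (q r : quot) : quot := qpi (val q + val r).
Definition qscale (a : R) (q : quot) : quot := qpi (a *: val q).

Lemma qaddE x y : qadd (qpi x) (qpi y) = qpi (x + y).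
Proof.
apply/qpiP => /=; rewrite opprD addrACA.
by case: hN => _ hD _; apply: hD; apply: canon_spec.
Qed.

Lemma qoppE x : qopp (qpi x) = qpi (- x).
Proof. by apply/qpiP => /=; rewrite -opprD; apply: submodN => //; apply: canon_spec. Qed.

Lemma qscaleE a x : qscale a (qpi x) = qpi (a *: x).
Proof.
apply/qpiP => /=; rewrite -scalerBr.
by case: hN => _ _ hZ; apply: hZ; apply: canon_spec.
Qed.

Lemma quot_ind (P : quot -> Prop) : (forall x, P (qpi x)) -> forall q, P q.
Proof. by move=> h q; rewrite -(qpi_val q). Qed.

Lemma qaddA : associative qadd.
Proof.
by elim/quot_ind => x; elim/quot_ind => y; elim/quot_ind => z; rewrite !qaddE addrA.
Qed.
Lemma qaddC : commutative qadd.
Proof. by elim/quot_ind => x; elim/quot_ind => y; rewrite !qaddE addrC. Qed.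
Lemma qadd0 : left_id qzero qadd.
Proof. by elim/quot_ind => x; rewrite /qzero qaddE add0r. Qed.
Lemma qaddN : left_inverse qzero qopp qadd.
Proof. by elim/quot_ind => x; rewrite qoppE qaddE addNr. Qed.

HB.instance Definition _ := GRing.isZmodule.Build quot qaddA qaddC qadd0 qaddN.

Lemma qpiD x y : qpi x + qpi y = qpi (x + y). Proof. exact: qaddE. Qed.
Lemma qpi00 : qpi 0 = 0. Proof. by []. Qed.
Lemma qpiN x : - qpi x = qpi (- x). Proof. exact: qoppE. Qed.

Lemma qscaleA a b v : qscale a (qscale b v) = qscale (a * b) v.
Proof. by elim/quot_ind: v => x; rewrite !qscaleE scalerA. Qed.
Lemma qscale1 : left_id 1 qscale.
Proof. by elim/quot_ind => x; rewrite qscaleE scale1r. Qed.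
Lemma qscaleDr : right_distributive qscale +%R.
Proof.
move=> a; elim/quot_ind => x; elim/quot_ind => y.
by rewrite qpiD !qscaleE qpiD scalerDr.
Qed.
Lemma qscaleDl v : {morph qscale^~ v: a b / a + b}.
Proof.
move=> a b; elim/quot_ind: v => x.
by rewrite !qscaleE qpiD scalerDl.
Qed.

HB.instance Definition _ := GRing.Zmodule_isLmodule.Build R quot qscaleA qscale1 qscaleDr qscaleDl.

Lemma qpiZ a x : a *: qpi x = qpi (a *: x). Proof. exact: qscaleE. Qed.

Lemma qpi_lin : linear (qpi : M -> quot).
Proof.
by move=> a x y; rewrite qpiZ qpiD.
Qed.

Lemma qpi0 x : qpi x = 0 <-> N x.
Proof. by rewrite -qpi00 qpiP subr0. Qed.

Lemma qpi_surj (q : quot) : exists x, qpi x = q.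
Proof. by exists (val q); apply: qpi_val. Qed.

End Quot.

Section Sub.
Context {R : pzRingType} (M : lmodType R) (P : pred M).
Hypotheses (P0 : P 0) (PD : forall x y, P x -> P y -> P (x + y))
  (PZ : forall a x, P x -> P (a *: x)).

Definition subm_of (h0 : P 0) (hD : forall x y, P x -> P y -> P (x + y))
  (hZ : forall a x, P x -> P (a *: x)) := {x : M | P x}.
Definition subm := subm_of P0 PD PZ.
HB.instance Definition _ := [Choice of subm by <:].

Lemma PN x : P x -> P (- x). Proof. by move=> h; rewrite -scaleN1r; apply: PZ. Qed.

Definition szero : subm := exist _ 0 P0.
Definition sopp (q : subm) : subm := exist _ (- val q) (PN (valP q)).
Definition sadd (q r : subm) : subm := exist _ (val q + val r) (PD (valP q) (valP r)).
Definition sscale a (q : subm) : subm := exist _ (a *: val q) (PZ a (valP q)).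

Lemma saddA : associative sadd. Proof. by move=> *; apply: val_inj; rewrite /= addrA. Qed.
Lemma saddC : commutative sadd. Proof. by move=> *; apply: val_inj; rewrite /= addrC. Qed.
Lemma sadd0 : left_id szero sadd. Proof. by move=> *; apply: val_inj; rewrite /= add0r. Qed.
Lemma saddN : left_inverse szero sopp sadd. Proof. by move=> *; apply: val_inj; rewrite /= addNr. Qed.
HB.instance Definition _ := GRing.isZmodule.Build subm saddA saddC sadd0 saddN.
Lemma sscaleA a b v : sscale a (sscale b v) = sscale (a * b) v.
Proof. by apply: val_inj; rewrite /= scalerA. Qed.
Lemma sscale1 : left_id 1 sscale. Proof. by move=> *; apply: val_inj; rewrite /= scale1r. Qed.
Lemma sscaleDr : right_distributive sscale +%R.
Proof. by move=> *; apply: val_inj; rewrite /= scalerDr. Qed.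
Lemma sscaleDl v : {morph sscale^~ v: a b / a + b}.
Proof. by move=> *; apply: val_inj; rewrite /= scalerDl. Qed.
HB.instance Definition _ := GRing.Zmodule_isLmodule.Build R subm sscaleA sscale1 sscaleDr sscaleDl.

Lemma sval_lin : linear (val : subm -> M). Proof. by []. Qed.
End Sub.

Local Close Scope ring_scope.

Local Open Scope ring_scope.



Section Gen.
Context {R : pzRingType} {G : groupType} (gens : seq G).

Lemma sfilt_img (M N : lmodType R) (actM : G -> M -> M) (actN : G -> N -> N)
    (SM : seq M) (f : M -> N) S m :
  is_action actN -> linear f -> (forall g m, f (actM g m) = actN g (f m)) ->
  sfilt actM SM S m -> sfilt actN (map f SM) S (f m).
Proof.
move=> haN lf hf; apply: (gen_min (P := fun m => sfilt actN _ S (f m))).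
  by apply: preim_submod => //; apply: sfilt_submod.
move=> x [s [sg hsg [hs ->]]]; rewrite hf; apply: sfilt_gen => //.
exact: map_f.
Qed.

Lemma sfilt_img_inv (M N : lmodType R) (actM : G -> M -> M) (actN : G -> N -> N)
    (SM : seq M) (f : M -> N) S n :
  is_action actM -> linear f -> (forall g m, f (actM g m) = actN g (f m)) ->
  sfilt actN (map f SM) S n -> exists2 m, sfilt actM SM S m & f m = n.
Proof.
move=> haM lf hf.
apply: (gen_min (P := fun n => exists2 m, sfilt actM SM S m & f m = n)).
  by apply: img_submod => //; apply: sfilt_submod.
move=> x [s [sg /mapP [sg' hsg' ->] [hs ->]]].
by exists (actM s sg'); [apply: sfilt_gen | rewrite hf].
Qed.

Lemma sfilt_split (M : lmodType R) (act : G -> M -> M) (Sig : seq M)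
    (T1 T2 : G -> Prop) m :
  sfilt act Sig (fun y => T1 y \/ T2 y) m ->
  exists m1 m2, [/\ sfilt act Sig T1 m1, sfilt act Sig T2 m2 & m = m1 + m2].
Proof.
apply: (gen_min (P := fun m => exists m1 m2,
  [/\ sfilt act Sig T1 m1, sfilt act Sig T2 m2 & m = m1 + m2])).
  split.
  - exists 0, 0; rewrite addr0; split => //.
    + by case: (@sfilt_submod _ _ _ act Sig T1).
    + by case: (@sfilt_submod _ _ _ act Sig T2).
  - move=> x y [x1 [x2 [h1 h2 ->]]] [y1 [y2 [h1' h2' ->]]].
    exists (x1 + y1), (x2 + y2); split; last by rewrite addrACA.
    + by case: (@sfilt_submod _ _ _ act Sig T1) => _ hD _; apply: hD.
    + by case: (@sfilt_submod _ _ _ act Sig T2) => _ hD _; apply: hD.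
  - move=> a x [x1 [x2 [h1 h2 ->]]]; exists (a *: x1), (a *: x2); split.
    + by case: (@sfilt_submod _ _ _ act Sig T1) => _ _ hZ; apply: hZ.
    + by case: (@sfilt_submod _ _ _ act Sig T2) => _ _ hZ; apply: hZ.
    + by rewrite scalerDr.
move=> x [s [sg hsg [[hs|hs] ->]]].
- exists (act s sg), 0; rewrite addr0; split => //; first exact: sfilt_gen.
  by case: (@sfilt_submod _ _ _ act Sig T2).
- exists 0; exists (act s sg); rewrite add0r; split => //; last exact: sfilt_gen.
  by case: (@sfilt_submod _ _ _ act Sig T1).
Qed.

Lemma bbi_comp (M N P : lmodType R) (F1 : @filtration R G M) (F2 : @filtration R G N)
    (F3 : @filtration R G P) (f : M -> N) (g : N -> P) :
  fmono F1 -> fmono F3 ->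
  (forall y, (exists x, g (f x) = g y) -> exists x, f x = y) ->
  bbicontrolled gens F1 F2 f -> bbicontrolled gens F2 F3 g ->
  bbicontrolled gens F1 F3 (g \o f).
Proof.
move=> m1 m3 hfib [b1 [h1 h1']] [b2 [h2 h2']]; exists (b1 + b2)%N; split.
- move=> S m hm; apply: (m3 _ _ _ _ (h2 _ _ (h1 _ _ hm))) => x.
  exact: enl_enl.
- move=> S n [m hm] hn.
  have [y hy hgy] := h2' S n (ex_intro _ (f m) hm) hn.
  have [x hx] := hfib y (ex_intro _ m (etrans hm (esym hgy))).
  have [z hz hfz] := h1' _ y (ex_intro _ x hx) hy.
  exists z; last by rewrite /= hfz.
  apply: (m1 _ _ _ _ hz) => w hw; rewrite addnC; exact: enl_enl.
Qed.

End Gen.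

Local Close Scope ring_scope.

Local Open Scope ring_scope.



Section BxGen.
Context {R : pzRingType} {G : groupType} (gens : seq G).
Hypothesis hgen : generates_group gens.
Notation Bx := (@Bx_obj R G gens).
Notation sF A := (@s_filt R G gens A).

Lemma bx_Bobj (A : Bx) : B_obj gens (sF A).
Proof. by apply: sfilt_Bobj => //; [apply: bx_actP | apply: bx_gensP | apply: bx_proper]. Qed.

Lemma bx_mono (A : Bx) : fmono (sF A).
Proof. exact: sfilt_fmono. Qed.

Lemma bx_hom_ctrl (A B : Bx) (f : bx_mod A -> bx_mod B) : Bx_hom f ->
  exists k, forall S m, sF A S m -> sF B (enlarge gens S k) (f m).
Proof.
move=> [lf hf]; apply: sfilt_control => //; [apply: bx_actP | apply: bx_actP | apply: bx_gensP].
Qed.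

Lemma bx_hom_bc (A B : Bx) (f : bx_mod A -> bx_mod B) : Bx_hom f ->
  bcontrolled gens (sF A) (sF B) f.
Proof. by move/bx_hom_ctrl. Qed.

Lemma exact_kercoker (A B C : Bx) (i : bx_mod A -> bx_mod B) (p : bx_mod B -> bx_mod C) :
  Bx_hom i -> Bx_hom p -> injective i -> (forall c, exists b, p b = c) ->
  (forall b, p b = 0 <-> exists a, i a = b) -> Bx_kercoker i p.
Proof.
move=> [li hi] [lp hp] ii sp hex.
have pi0 a : p (i a) = 0 by apply/hex; exists a.
split; [by split | by split | |].
- split => // X f [lf hf] hpf.
  pose g x := epsilon (inhabits 0) (fun a => i a = f x).
  have hg x : i (g x) = f x.
    by apply: (epsilon_spec (inhabits 0) (fun a => i a = f x)); apply/hex.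
  exists g; split => //.
  + split.
    * by move=> a x y; apply: ii; rewrite li !hg lf.
    * by move=> h x; apply: ii; rewrite hi !hg hf.
  + by move=> g' _ hg' x; apply: ii; rewrite hg' hg.
- split => // X f [lf hf] hfi.
  pose s c := epsilon (inhabits 0) (fun b => p b = c).
  have hs c : p (s c) = c by apply: (epsilon_spec (inhabits 0) (fun b => p b = c)).
  have fib b b' : p b = p b' -> f b = f b'.
    move=> e; have : p (b - b') = 0 by rewrite linB // e subrr.
    case/hex => a ha; apply/eqP; rewrite -subr_eq0 -linB // -ha.
    by rewrite hfi.
  exists (fun c => f (s c)); split.
  + split.
    * move=> a x y; rewrite -lf; apply: fib.
      by rewrite lp !hs.
    * by move=> h x; rewrite -hf; apply: fib; rewrite hp !hs.
  + by move=> b; apply: fib; rewrite hs.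
  + move=> h' _ hh' c; rewrite -hh'; congr h'; by rewrite hs.
Qed.

End BxGen.

Local Close Scope ring_scope.

Local Open Scope ring_scope.



Section QAct.
Context {R : pzRingType} {G : groupType} (M : lmodType R) (N : M -> Prop).
Hypothesis hN : is_submod N.
Context (act : G -> M -> M).
Hypothesis hact : is_action act.
Hypothesis hNa : forall g m, N m -> N (act g m).

Local Notation quotL := (quot hN).

Definition qact g (q : quotL) : quotL := qpi hN (act g (val q)).

Lemma qactE g x : qact g (qpi hN x) = qpi hN (act g x).
Proof.
apply/qpiP; rewrite -linB; last exact: act_lin.
by apply: hNa; apply: canon_spec.
Qed.

Lemma qact_action : is_action qact.
Proof.
split.
- move=> g a; elim/(@quot_ind R M N hN) => x; elim/(@quot_ind R M N hN) => y.
  by rewrite qpiZ qpiD !qactE qpiZ qpiD (act_lin hact).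
- by elim/(@quot_ind R M N hN) => x; rewrite qactE act1.
- by move=> g h; elim/(@quot_ind R M N hN) => x; rewrite !qactE actM.
Qed.

End QAct.

Section QIns.
Context {R : pzRingType} {G : groupType} (gens : seq G).

Lemma quot_insular (M Q A : lmodType R) (FM : @filtration R G M) (FQ : @filtration R G Q)
    (actA : G -> A -> A) (SA : seq A) (j : A -> M) (pi : M -> Q) (cA bA : nat) :
  (forall S, is_submod (FM S)) -> fmono FM -> insular gens FM -> fmono FQ ->
  linear j -> linear pi ->
  (forall S a, sfilt actA SA S a -> FM (enlarge gens S cA) (j a)) ->
  (forall S a, FM S (j a) -> sfilt actA SA (enlarge gens S bA) a) ->
  (forall x, pi x = 0 -> exists a, j a = x) ->
  (forall a, pi (j a) = 0) ->
  (forall S q, FQ S q -> exists2 x, FM S x & pi x = q) ->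
  (forall S x, FM S x -> FQ S (pi x)) ->
  insular gens FQ.
Proof.
move=> hsub hmM [d hd] hmQ lj lpi hjc hjb hker hpj hQ1 hQ2.
exists (bA + cA + d)%N => S U q hqS hqU.
have [x hx hxq] := hQ1 _ _ hqS; have [y hy hyq] := hQ1 _ _ hqU.
have [a ha] : exists a, j a = x - y by apply: hker; rewrite linB // hxq hyq subrr.
have hSU : FM (fun z => S z \/ U z) (j a).
  rewrite ha; apply: submodB => //.
  - by apply: (hmM _ _ _ _ hx) => z; left.
  - by apply: (hmM _ _ _ _ hy) => z; right.
have h2' : sfilt actA SA (fun z => enlarge gens S bA z \/ enlarge gens U bA z) a.
  apply: (sfilt_mono _ (hjb _ _ hSU)) => z [w [hw|hw] hd'].
  - by left; exists w.
  - by right; exists w.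
move: h2' => /sfilt_split [a1 [a2 [h1 h2 e]]].
pose z := x - j a1.
have ez : z = y + j a2.
  have e' : x - y = j a1 + j a2 by rewrite -ha e linD.
  by rewrite /z -[x](subrK y) e' addrAC [j a1 + j a2 - _]addrAC subrr add0r addrC.
have hzS : FM (enlarge gens S (bA + cA)) z.
  apply: submodB => //.
  - by apply: (hmM _ _ _ _ hx) => w hw; apply: enl_self.
  - by apply: (hmM _ _ _ _ (hjc _ _ h1)) => w; apply: enl_enl.
have hzU : FM (enlarge gens U (bA + cA)) z.
  rewrite ez; case: (hsub (enlarge gens U (bA + cA))) => _ hD _; apply: hD.
  - by apply: (hmM _ _ _ _ hy) => w hw; apply: enl_self.
  - by apply: (hmM _ _ _ _ (hjc _ _ h2)) => w; apply: enl_enl.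
have := hQ2 _ _ (hd _ _ _ hzS hzU).
have -> : pi z = q by rewrite /z linB // hpj subr0.
apply: hmQ => w [hw1 hw2]; split; exact: enl_enl.
Qed.

End QIns.

Section Coker.
Context {R : pzRingType} {G : groupType} (gens : seq G).
Hypothesis hgen : generates_group gens.
Notation Bx := (@Bx_obj R G gens).
Notation sF A := (@s_filt R G gens A).

Definition mkBx (M : lmodType R) (act : G -> M -> M) (Sig : seq M)
  (ha : is_action act) (hg : generates_mod act Sig)
  (hins : insular gens (sfilt act Sig)) : Bx :=
  @BxObj R G gens M act Sig ha hg
    (ex_intro _ Sig (And3 hg (sfilt_lean gens act Sig) hins)).

Lemma B_exact_of (A B C : Bx) (i : bx_mod A -> bx_mod B) (p : bx_mod B -> bx_mod C) :
  Bx_hom i -> Bx_hom p -> injective i -> (forall c, exists b, p b = c) ->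
  (forall b, p b = 0 <-> exists a, i a = b) ->
  bbicontrolled gens (sF A) (sF B) i -> bbicontrolled gens (sF B) (sF C) p ->
  B_exact gens (sF A) (sF B) (sF C) i p.
Proof.
move=> hi hp ii sp ex bi bp; split => //.
- by split; [|split]; apply: bx_Bobj.
- by split; split; [case: hi | apply: bx_hom_bc | case: hp | apply: bx_hom_bc].
Qed.

Lemma adm_epi_of (A B C : Bx) (i : bx_mod A -> bx_mod B) (p : bx_mod B -> bx_mod C) :
  Bx_hom i -> Bx_hom p -> injective i -> (forall c, exists b, p b = c) ->
  (forall b, p b = 0 <-> exists a, i a = b) ->
  bbicontrolled gens (sF A) (sF B) i -> bbicontrolled gens (sF B) (sF C) p ->
  Bx_adm_epi p.
Proof.
move=> hi hp ii sp ex bi bp; split => //.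
by exists (bx_mod A), (sF A), i; apply: B_exact_of.
Qed.

Lemma Bx_exact_of (A B C : Bx) (i : bx_mod A -> bx_mod B) (p : bx_mod B -> bx_mod C) :
  Bx_hom i -> Bx_hom p -> injective i -> (forall c, exists b, p b = c) ->
  (forall b, p b = 0 <-> exists a, i a = b) ->
  bbicontrolled gens (sF A) (sF B) i -> bbicontrolled gens (sF B) (sF C) p ->
  Bx_exact i p.
Proof.
move=> hi hp ii sp ex bi bp; split.
- exact: exact_kercoker.
- by split.
- exact: adm_epi_of hi hp ii sp ex bi bp.
Qed.

Section Img.
Context (A B : Bx) (i : bx_mod A -> bx_mod B).
Hypothesis hi : Bx_hom i.

Definition imN (b : bx_mod B) : Prop := exists a, i a = b.

Lemma imN_sub : is_submod imN.
Proof.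
case: hi => li _; split.
- by exists 0; rewrite lin0.
- by move=> x y [a <-] [a' <-]; exists (a + a'); rewrite linD.
- by move=> c x [a <-]; exists (c *: a); rewrite linZ.
Qed.

Lemma imN_act g m : imN m -> imN (bx_act g m).
Proof. by case: hi => _ he [a <-]; exists (bx_act g a); rewrite he. Qed.
End Img.

Section CokerObj.
Context (A B : Bx) (i : bx_mod A -> bx_mod B).
Hypothesis hi : Bx_adm_mono i.

Let hhom : Bx_hom i. Proof. by case: hi. Qed.
Let hN := imN_sub hhom.
Let qa := qact (hN:=hN) (bx_act (b:=B)).
Let qaP : is_action qa := qact_action hN (bx_actP B) (imN_act hhom).

Lemma qpi_equi g m : qpi hN (bx_act g m) = qa g (qpi hN m).
Proof. by rewrite /qa (qactE hN (bx_actP B) (imN_act hhom)). Qed.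

Let QS := map (qpi hN) (bx_gens B).

Lemma coker_gen : generates_mod qa QS.
Proof.
elim/(@quot_ind R _ _ hN) => x.
apply: (sfilt_img (actM := bx_act (b:=B))) => //; first exact: qpi_lin.
  exact: qpi_equi.
exact: bx_gensP.
Qed.

Lemma coker_ins : insular gens (sfilt qa QS).
Proof.
have [cA hc] := bx_hom_ctrl hgen hhom.
case: hi => _ ii [bA [_ hb]].
apply: (quot_insular (FM := sF B) (actA := bx_act (b:=A)) (SA := bx_gens A)
   (j := i) (pi := qpi hN) (cA := cA) (bA := bA)).
- by move=> S; apply: sfilt_submod.
- exact: bx_mono.
- by case: (bx_Bobj hgen B).
- exact: sfilt_fmono.
- by case: hhom.
- exact: qpi_lin.
- exact: hc.
- by move=> S a h; have [m hm /ii <-] := hb S (i a) (ex_intro _ a erefl) h.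
- by move=> x /qpi0.
- by move=> a; apply/qpi0; exists a.
- move=> S q hq; apply: (sfilt_img_inv (actN := qa)) hq.
  + exact: bx_actP.
  + exact: qpi_lin.
  + exact: qpi_equi.
- move=> S x hx; apply: (sfilt_img (actM := bx_act (b:=B))) hx => //.
  + exact: qpi_lin.
  + exact: qpi_equi.
Qed.

Definition cokerBx : Bx := mkBx qaP coker_gen coker_ins.

Lemma coker_exact : Bx_exact (C := cokerBx) i (qpi hN).
Proof.
have hp : Bx_hom (A := B) (B := cokerBx) (qpi hN).
  by split; [exact: qpi_lin | exact: qpi_equi].
case: (hi) => _ ii bi.
apply: Bx_exact_of => //.
- exact: qpi_surj.
- by move=> b; rewrite qpi0.
- exists 0%N; split.
  + move=> S m hm; apply: (sfilt_mono _ (sfilt_img (actM := bx_act (b:=B)) _ (qpi_lin hN) qpi_equi hm)).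
    * by move=> w hw; apply: enl_self.
    * exact: qaP.
  + move=> S n _ hn.
    have [m hm <-] := sfilt_img_inv (actM := bx_act (b:=B)) (actN := qa) (bx_actP B) (qpi_lin hN) qpi_equi hn.
    by exists m => //; apply: (sfilt_mono _ hm) => w hw; apply: enl_self.
Qed.

End CokerObj.

Lemma admmono_Emono (A B : Bx) (i : bx_mod A -> bx_mod B) : Bx_adm_mono i -> E_mono i.
Proof. by move=> hi; exists (cokerBx hi), (qpi _); apply: coker_exact. Qed.

End Coker.

Local Close Scope ring_scope.

Local Open Scope ring_scope.



Section KerObj.
Context {R : pzRingType} {G : groupType} (gens : seq G).
Hypothesis hgen : generates_group gens.
Notation Bx := (@Bx_obj R G gens).
Notation sF A := (@s_filt R G gens A).

Context (B C : Bx) (p : bx_mod B -> bx_mod C) (A0 : lmodType R) (FA0 : @filtration R G A0)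
  (i0 : A0 -> bx_mod B).
Hypothesis hp : Bx_hom p.
Hypothesis hex : B_exact gens FA0 (sF B) (sF C) i0 p.

Let li : linear i0. Proof. by case: hex => _ [[]]. Qed.
Let ii : injective i0. Proof. by case: hex => _ _ []. Qed.
Let ex : forall b, p b = 0 <-> exists a, i0 a = b. Proof. by case: hex => _ _ []. Qed.
Let hA0 : B_obj gens FA0. Proof. by case: hex => [[]]. Qed.
Let bi : bbicontrolled gens FA0 (sF B) i0. Proof. by case: hex => _ _ _ []. Qed.
Let FA0sub S : is_submod (FA0 S). Proof. by case: hA0 => [[]]. Qed.
Let FA0mono : fmono FA0. Proof. by case: hA0 => [[]]. Qed.
Let FA0full m : FA0 (fun _ => True) m. Proof. by case: hA0 => [[]]. Qed.

Definition actK g (a : A0) : A0 := epsilon (inhabits 0) (fun a' => i0 a' = bx_act g (i0 a)).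

Lemma actKP g a : i0 (actK g a) = bx_act g (i0 a).
Proof.
apply: (epsilon_spec (inhabits 0) (fun a' => i0 a' = bx_act g (i0 a))); apply/ex.
case: hp => lp hpe; rewrite hpe.
have -> : p (i0 a) = 0 by apply/ex; exists a.
by rewrite (lin0 (act_lin (bx_actP C) g)).
Qed.

Lemma actK_action : is_action actK.
Proof.
split.
- by move=> g a x y; apply: ii; rewrite li !actKP li (act_lin (bx_actP B)).
- by move=> a; apply: ii; rewrite actKP act1 //; apply: bx_actP.
- by move=> g h a; apply: ii; rewrite !actKP actM //; apply: bx_actP.
Qed.

Let D := proj1_sig (constructive_indefinite_description _ (let: And5 _ _ l _ _ := hA0 in l)).
Let hD : forall S m, FA0 S m ->
    gen_submod (fun v => exists2 x, S x & FA0 (ball gens x D) v) m.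
Proof. by rewrite /D; case: constructive_indefinite_description. Qed.
Let b := proj1_sig (constructive_indefinite_description _ bi).
Let hb1 : forall S m, FA0 S m -> sF B (enlarge gens S b) (i0 m).
Proof. by rewrite /b; case: constructive_indefinite_description => ? []. Qed.
Let hb2 : forall S n, (exists m, i0 m = n) -> sF B S n ->
    exists2 m, FA0 (enlarge gens S b) m & i0 m = n.
Proof. by rewrite /b; case: constructive_indefinite_description => ? []. Qed.

Let D' := (D + b + b)%N.

Let KS := proj1_sig (constructive_indefinite_description _ (let: And5 _ _ _ _ l := hA0 in
   l (ball gens 1%g D') (ex_intro _ 1%g (ex_intro _ D' (fun y h => h))))).
Let hKS : forall m, FA0 (ball gens 1%g D') m <-> gen_submod (fun x => x \in KS) m.
Proof. by rewrite /KS; case: constructive_indefinite_description. Qed.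

(* translating a piece back to the identity *)
Lemma ker_local x v : FA0 (ball gens x D) v -> sfilt actK KS (fun y => y = x) v.
Proof.
move=> hv.
pose v' := actK x^-1%g v.
have hv' : FA0 (ball gens 1%g D') v'.
  have h1 := sfilt_act (bx_actP B) (g := x^-1%g) (hb1 hv).
  rewrite -actKP in h1.
  have [m hm /ii e] := hb2 (ex_intro _ _ erefl) h1.
  rewrite /v' -e; apply: (FA0mono _ hm) => y.
  move=> [z [w hw hwz] hzy]; rewrite invgK in hwz.
  have h2 := dist_trans hw hwz.
  rewrite -{1}(mulg1 x) in h2; move/dist_mulL_inv: h2 => h2.
  exact: dist_trans h2 hzy.
have hv'' : sfilt actK KS (fun y => y = 1%g) v'.
  move/hKS: hv'; apply: gen_min; first exact: sfilt_submod.
  move=> s hs; rewrite -(act1 actK_action s); exact: sfilt_gen.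
have e : actK x v' = v.
  by rewrite /v' -(actM actK_action) mulgV (act1 actK_action).
rewrite -e; apply: (sfilt_mono _ (sfilt_act actK_action (g:=x) hv'')) => y hy.
by rewrite -[y](mulVKg x) hy mulg1.
Qed.

Lemma ker_le2 S a : FA0 S a -> sfilt actK KS (enlarge gens S 0) a.
Proof.
move/hD; apply: gen_min; first exact: sfilt_submod.
move=> v [x hx /ker_local]; apply: sfilt_mono => y ->; exact: enl_self.
Qed.

Lemma ker_gen : generates_mod actK KS.
Proof.
move=> a; have := ker_le2 (FA0full a); apply: sfilt_mono => //.
Qed.

Lemma ker_le1 S a : sfilt actK KS S a -> FA0 (enlarge gens S (D' + b + b)) a.
Proof.
apply: gen_min; first exact: FA0sub.
move=> x [s [sg hsg [hs ->]]].
have hsg' : FA0 (ball gens 1%g D') sg by apply/hKS; apply: gen_in.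
have h1 := sfilt_act (bx_actP B) (g := s) (hb1 hsg').
rewrite -actKP in h1.
have [m hm /ii <-] := hb2 (ex_intro _ _ erefl) h1.
apply: (FA0mono _ hm) => y.
move=> [z [w hw hwz] hzy]; exists s => //.
have h2 := dist_mulL s (dist_trans hw hwz).
rewrite mulg1 mulVKg in h2.
exact: dist_trans h2 hzy.
Qed.

Lemma ker_ins : insular gens (sfilt actK KS).
Proof.
apply: (insular_transfer (F := FA0) (k1 := (D' + b + b)%N) (k2 := 0%N)).
- exact: sfilt_fmono.
- by move=> S m /ker_le1.
- by move=> S m /ker_le2.
- by case: hA0.
Qed.

Definition kerBx : Bx := mkBx actK_action ker_gen ker_ins.

Lemma ker_exact : Bx_exact (A := kerBx) i0 p.
Proof.
have hi : Bx_hom (A := kerBx) (B := B) i0.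
  by split => // g a; rewrite actKP.
apply: Bx_exact_of => //.
- by case: hex => _ _ [].
- exists (D' + b + b + b)%N; split.
  + move=> S m /ker_le1 /hb1; apply: (bx_mono (A:=B)) => w; exact: enl_enl.
  + move=> S n hn hS; have [m hm <-] := hb2 hn hS; exists m => //.
    apply: (sfilt_mono _ (ker_le2 hm)) => w /enl_enl.
    by apply: enl_mono => //; rewrite addn0 leq_addl.
- by case: hex => _ _ _ [].
Qed.

End KerObj.

Lemma admepi_Eepi {R : pzRingType} {G : groupType} (gens : seq G) (hgen : generates_group gens)
  (B C : @Bx_obj R G gens) (p : bx_mod B -> bx_mod C) : Bx_adm_epi p -> E_epi p.
Proof.
move=> [hp [A0 [FA0 [i0 hex]]]].
by exists (kerBx hp hex), i0; exact: ker_exact.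
Qed.

Local Close Scope ring_scope.

Local Open Scope ring_scope.



Section SExact.
Context {R : pzRingType} {G : groupType} (gens : seq G).
Hypothesis hgen : generates_group gens.
Notation Bx := (@Bx_obj R G gens).
Notation sF A := (@s_filt R G gens A).

Lemma Bx_exact_facts (A B C : Bx) (i : bx_mod A -> bx_mod B) (p : bx_mod B -> bx_mod C) :
  Bx_exact i p ->
  [/\ Bx_hom i, Bx_hom p, injective i, (forall c, exists b, p b = c) &
    [/\ (forall b, p b = 0 <-> exists a, i a = b),
        bbicontrolled gens (sF A) (sF B) i & bbicontrolled gens (sF B) (sF C) p]].
Proof.
move=> [[hi hp [hker kerU] _] [_ ii bi] [_ [A0 [FA0 [i0 hex]]]]].
have hex' := hex.
case: hex' => _ _ [_ sp ex] [_ bp].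
have [[hi0 _ _ _] _ _] := ker_exact hgen hp hex.
split => //; split => // b; split; last by move=> [a <-].
move/ex => [a0 ha0].
have [g [_ hg _]] := kerU (kerBx hp hex) i0 hi0 (fun x => proj2 (ex _) (ex_intro _ x erefl)).
by exists (g a0); rewrite hg.
Qed.

Lemma s_exact_thm : @s_exact R G gens.
Proof.
move=> A B C i p /Bx_exact_facts [hi hp ii sp [ex bi bp]].
exact: B_exact_of.
Qed.

Lemma Beq_hom_of (A B : Bx) (f : bx_mod A -> bx_mod B) :
  Bx_hom f -> Beq_hom gens (sF A) (bx_act (b:=A)) (sF B) (bx_act (b:=B)) f.
Proof.
move=> hf; split; last by case: hf.
split; [by case: hf | exact: bx_hom_bc].
Qed.

Lemma sGamma_exact_thm : @sGamma_exact R G gens.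
Proof.
move=> A B C i p hex.
have [hi hp _ _ _] := Bx_exact_facts hex.
split.
- by apply: sfilt_Beq; [apply: bx_actP | apply: bx_Bobj].
- by apply: sfilt_Beq; [apply: bx_actP | apply: bx_Bobj].
- by apply: sfilt_Beq; [apply: bx_actP | apply: bx_Bobj].
- by split; apply: Beq_hom_of.
- exact: s_exact_thm.
Qed.

End SExact.

Local Close Scope ring_scope.

Local Open Scope ring_scope.



Lemma sfilt_sub_gens {R : pzRingType} {G : groupType} (M : lmodType R) (act : G -> M -> M)
    (S1 S2 : seq M) S m :
  {subset S1 <= S2} -> sfilt act S1 S m -> sfilt act S2 S m.
Proof.
move=> hs; apply: gen_mono => x [s [sg hsg [hS ->]]].
by exists s, sg => //; apply: hs.
Qed.

Lemma prod_insular {R : pzRingType} {G : groupType} (gens : seq G) (T M N : Type)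
    (F1 : (G -> Prop) -> M -> Prop) (F2 : (G -> Prop) -> N -> Prop)
    (u : T -> M) (v : T -> N) :
  (forall S U, (forall x, S x -> U x) -> forall m, F1 S m -> F1 U m) ->
  (forall S U, (forall x, S x -> U x) -> forall m, F2 S m -> F2 U m) ->
  (exists d, forall S U m, F1 S m -> F1 U m ->
    F1 (fun y => enlarge gens S d y /\ enlarge gens U d y) m) ->
  (exists d, forall S U m, F2 S m -> F2 U m ->
    F2 (fun y => enlarge gens S d y /\ enlarge gens U d y) m) ->
  exists d, forall S U x, F1 S (u x) /\ F2 S (v x) -> F1 U (u x) /\ F2 U (v x) ->
    F1 (fun y => enlarge gens S d y /\ enlarge gens U d y) (u x) /\
    F2 (fun y => enlarge gens S d y /\ enlarge gens U d y) (v x).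
Proof.
move=> m1 m2 [d1 h1] [d2 h2]; exists (maxn d1 d2) => S U x [a1 a2] [b1 b2]; split.
- apply: (m1 _ _ _ _ (h1 _ _ _ a1 b1)) => y [hy1 hy2]; split.
  + by apply: enl_mono hy1 => //; rewrite leq_maxl.
  + by apply: enl_mono hy2 => //; rewrite leq_maxl.
- apply: (m2 _ _ _ _ (h2 _ _ _ a2 b2)) => y [hy1 hy2]; split.
  + by apply: enl_mono hy1 => //; rewrite leq_maxr.
  + by apply: enl_mono hy2 => //; rewrite leq_maxr.
Qed.

Section Pullback.
Context {R : pzRingType} {G : groupType} (gens : seq G).
Hypothesis hgen : generates_group gens.
Notation Bx := (@Bx_obj R G gens).
Notation sF A := (@s_filt R G gens A).

Context (A C C' K : Bx) (p : bx_mod A -> bx_mod C) (i : bx_mod K -> bx_mod A)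
  (f : bx_mod C' -> bx_mod C).
Hypothesis hex : Bx_exact i p.
Hypothesis hf : Bx_hom f.

Let facts := Bx_exact_facts hgen hex.
Let hi : Bx_hom i. Proof. by case: facts. Qed.
Let hp : Bx_hom p. Proof. by case: facts. Qed.
Let ii : injective i. Proof. by case: facts. Qed.
Let sp : forall c, exists b, p b = c. Proof. by case: facts. Qed.
Let ex : forall b, p b = 0 <-> exists a, i a = b. Proof. by case: facts => _ _ _ _ []. Qed.
Let bi : bbicontrolled gens (sF K) (sF A) i. Proof. by case: facts => _ _ _ _ []. Qed.
Let lp : linear p. Proof. by case: hp. Qed.
Let lf : linear f. Proof. by case: hf. Qed.
Let li : linear i. Proof. by case: hi. Qed.

Definition pbP (x : bx_mod A * bx_mod C') : bool := p x.1 == f x.2.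
Lemma pb0 : pbP 0. Proof. by rewrite /pbP /= !lin0. Qed.
Lemma pbD x y : pbP x -> pbP y -> pbP (x + y).
Proof. by rewrite /pbP /= => /eqP hx /eqP hy; rewrite !linD // hx hy. Qed.
Lemma pbZ a x : pbP x -> pbP (a *: x).
Proof. by rewrite /pbP /= => /eqP hx; rewrite !linZ // hx. Qed.

Local Notation PBM := (subm pb0 pbD pbZ).

Definition mkPB x (h : pbP x) : PBM := exist (fun x => pbP x) x h.

Definition fstv (x : PBM) : bx_mod A := (val x).1.
Definition sndv (x : PBM) : bx_mod C' := (val x).2.
Lemma fstv_lin : linear fstv. Proof. by []. Qed.
Lemma sndv_lin : linear sndv. Proof. by []. Qed.
Lemma pb_comm (x : PBM) : p (fstv x) = f (sndv x).
Proof. by apply/eqP; case: x. Qed.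

Lemma pbact g (x : PBM) : pbP (bx_act g (val x).1, bx_act g (val x).2).
Proof.
by rewrite /pbP /=; case: hp => _ ->; case: hf => _ ->; rewrite (pb_comm x).
Qed.

Definition pact g (x : PBM) : PBM := mkPB (pbact g x).

Lemma pact_action : is_action pact.
Proof.
split.
- by move=> g a x y; apply: val_inj; rewrite /= !(act_lin (bx_actP _)).
- by move=> x; apply: val_inj; rewrite /= !act1 //; [case: x => [[]]|apply: bx_actP..].
- by move=> g h x; apply: val_inj; rewrite /= !actM //; apply: bx_actP.
Qed.

Definition liftA (c : bx_mod C') : bx_mod A := epsilon (inhabits 0) (fun a => p a = f c).
Lemma liftAP c : pbP (liftA c, c).
Proof. by apply/eqP; apply: (epsilon_spec (inhabits 0) (fun a => p a = f c)). Qed.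
Definition lift c : PBM := mkPB (liftAP c).

Lemma iotaP k : pbP (i k, 0).
Proof. by apply/eqP => /=; rewrite lin0 //; apply/ex; exists k. Qed.
Definition iota k : PBM := mkPB (iotaP k).
Lemma iota_lin : linear iota.
Proof.
move=> a x y; apply: val_inj; rewrite /= li.
by rewrite [RHS]surjective_pairing /= scaler0 addr0.
Qed.
Lemma iota_equi g k : iota (bx_act g k) = pact g (iota k).
Proof.
apply: val_inj; rewrite /= (lin0 (act_lin (bx_actP C') g)).
by case: hi => _ ->.
Qed.

Definition PBS := map iota (bx_gens K) ++ map lift (bx_gens C').

Lemma pb_iota S k : sF K S k -> sfilt pact PBS S (iota k).
Proof.
move=> hk; apply: (sfilt_sub_gens (S1 := map iota (bx_gens K))).
  by move=> x hx; rewrite mem_cat hx.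
apply: sfilt_img hk => //; [exact: pact_action | exact: iota_lin | exact: iota_equi].
Qed.

Lemma pb_img_snd S c : sF C' S c -> exists2 x, sfilt pact PBS S x & sndv x = c.
Proof.
apply: (gen_min (P := fun c => exists2 x, sfilt pact PBS S x & sndv x = c)).
  by apply: img_submod => //; apply: sfilt_submod.
move=> y [s [sg hsg [hs ->]]]; exists (pact s (lift sg)) => //.
apply: sfilt_gen => //; rewrite mem_cat; apply/orP; right; exact: map_f.
Qed.

Let kf := proj1_sig (constructive_indefinite_description _
  (sfilt_control hgen PBS (f := fstv) pact_action (bx_actP A) (@bx_gensP _ _ _ A) fstv_lin
     (fun _ _ => erefl))).
Lemma pb_ctrl_fst S x : sfilt pact PBS S x -> sF A (enlarge gens S kf) (fstv x).
Proof. by rewrite /kf; case: constructive_indefinite_description => k /=; apply. Qed.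
Let ks := proj1_sig (constructive_indefinite_description _
  (sfilt_control hgen PBS (f := sndv) pact_action (bx_actP C') (@bx_gensP _ _ _ C') sndv_lin
     (fun _ _ => erefl))).
Lemma pb_ctrl_snd S x : sfilt pact PBS S x -> sF C' (enlarge gens S ks) (sndv x).
Proof. by rewrite /ks; case: constructive_indefinite_description => k /=; apply. Qed.
Let bI := proj1_sig (constructive_indefinite_description _ bi).
Let hbI2 : forall S n, (exists m, i m = n) -> sF A S n ->
    exists2 m, sF K (enlarge gens S bI) m & i m = n.
Proof. by rewrite /bI; case: constructive_indefinite_description => ? []. Qed.

Lemma pb_fle2 S x : sF A S (fstv x) -> sF C' S (sndv x) ->
  sfilt pact PBS (enlarge gens S (kf + bI)) x.
Proof.
move=> h1 h2; have [y hy ey] := pb_img_snd h2.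
have hy1 := pb_ctrl_fst hy.
have hd : sF A (enlarge gens S kf) (fstv x - fstv y).
  apply: (@submodB _ _ (sF A (enlarge gens S kf))); [exact: sfilt_submod | | exact: hy1].
  by apply: (sfilt_mono _ h1) => w; apply: enl_self.
have pd : p (fstv x - fstv y) = 0 by rewrite linB // !pb_comm ey subrr.
have [k hk] := proj1 (ex _) pd.
have [k' hk' ek] := hbI2 (ex_intro _ k hk) hd.
have ek' : k' = k by apply: ii; rewrite ek hk.
subst k'.
have e1 : fstv x = fstv y + i k by rewrite hk addrC subrK.
have e2 : sndv x = sndv y + 0 by rewrite addr0 ey.
have -> : x = y + iota k.
  apply: val_inj; rewrite [LHS]surjective_pairing [RHS]surjective_pairing /=.
  by congr pair; [exact: e1 | exact: e2].
case: (@sfilt_submod _ _ _ pact PBS (enlarge gens S (kf + bI))) => _ hD _; apply: hD.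
- by apply: (sfilt_mono _ hy) => w hw; apply: enl_self.
- by apply: (sfilt_mono _ (pb_iota hk')) => w; apply: enl_enl.
Qed.


Lemma pb_gen : generates_mod pact PBS.
Proof.
move=> x; apply: (sfilt_mono _ (pb_fle2 (@bx_gensP _ _ _ A _) (@bx_gensP _ _ _ C' _))) => //.
Qed.

Definition Fr (S : G -> Prop) (x : PBM) : Prop := sF A S (fstv x) /\ sF C' S (sndv x).

Lemma pb_ins : insular gens (sfilt pact PBS).
Proof.
have hA := bx_Bobj hgen A; have hC := bx_Bobj hgen C'.
have hPI := prod_insular (R := R) (gens := gens) (F1 := sF A) (F2 := sF C') fstv sndv
  (@bx_mono _ _ _ A) (@bx_mono _ _ _ C') (let: And5 _ _ _ ins _ := hA in ins)
  (let: And5 _ _ _ ins _ := hC in ins).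
case: hPI => d hd.
apply: (insular_transfer (F := Fr) (k1 := maxn kf ks) (k2 := (kf + bI)%N)).
- exact: sfilt_fmono.
- move=> S x hx; split.
  + by apply: (sfilt_mono _ (pb_ctrl_fst hx)) => w; apply: enl_mono => //; rewrite leq_maxl.
  + by apply: (sfilt_mono _ (pb_ctrl_snd hx)) => w; apply: enl_mono => //; rewrite leq_maxr.
- by move=> S x [h1 h2]; apply: pb_fle2.
- by exists d.
Qed.

Definition PB : Bx := mkBx pact_action pb_gen pb_ins.

Lemma pb_fst_hom : Bx_hom (A := PB) (B := A) fstv.
Proof. by []. Qed.
Lemma pb_snd_hom : Bx_hom (A := PB) (B := C') sndv.
Proof. by []. Qed.

Lemma pb_fle2' S (x : bx_mod PB) : sF A S (fstv x) -> sF C' S (sndv x) ->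
  sF PB (enlarge gens S (kf + bI)) x.
Proof. exact: pb_fle2. Qed.

Lemma pb_fle2_ex : exists k, forall S (x : bx_mod PB), sF A S (fstv x) -> sF C' S (sndv x) ->
  sF PB (enlarge gens S k) x.
Proof. by exists (kf + bI)%N; exact: pb_fle2. Qed.

Lemma pb_ctrl_fst' S (x : bx_mod PB) : sF PB S x -> sF A (enlarge gens S kf) (fstv x).
Proof. exact: pb_ctrl_fst. Qed.

Lemma pb_pullback : Bx_pullback p f (sndv : bx_mod PB -> _) fstv.
Proof.
split; first by split.
- exact: pb_comm.
- move=> X u v [lu hu] [lv hv] huv.
  pose h x : bx_mod PB := @mkPB (u x, v x) (introT eqP (huv x)).
  exists h; split => //.
  + split.
    * by move=> a x y; apply: val_inj; rewrite /= lu lv.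
    * by move=> g x; apply: val_inj; rewrite /= hu hv.
  + move=> h' _ h1 h2 x; apply: val_inj.
    by rewrite [LHS]surjective_pairing /=; congr pair; [exact: h1 | exact: h2].
Qed.

Lemma pb_Eepi : E_epi (B := PB) (C := C') sndv.
Proof.
exists K, iota; apply: Bx_exact_of => //.
- by split; [exact: iota_lin | exact: iota_equi].
- by move=> k k' /(congr1 fstv) /ii.
- by move=> c; exists (lift c).
- move=> x; split => [hx|[k <-] //].
  have : p (fstv x) = 0 by rewrite pb_comm [sndv x]hx lin0.
  case/ex => k hk; exists k; apply: val_inj.
  rewrite [RHS]surjective_pairing /=; congr pair; [exact: hk | by rewrite -hx].
- exists (kf + bI)%N; split.
  + move=> S k hk; apply: (sfilt_mono _ (pb_iota hk)) => w; exact: enl_self.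
  + move=> S x [k <-] hx.
    have := pb_ctrl_fst hx; rewrite /fstv /= => h.
    have [k' hk' ek] := hbI2 (ex_intro _ k erefl) h.
    have -> : k = k' by apply: ii.
    by exists k' => //; apply: (bx_mono (A := K) _ hk') => w; apply: enl_enl.
- exists ks; split.
  + by move=> S x hx; apply: pb_ctrl_snd.
  + move=> S c _ hc; have [x hx <-] := pb_img_snd hc.
    by exists x => //; apply: (sfilt_mono _ hx) => w; apply: enl_self.
Qed.

End Pullback.

Local Close Scope ring_scope.

Local Open Scope ring_scope.



Section Pushout.
Context {R : pzRingType} {G : groupType} (gens : seq G).
Hypothesis hgen : generates_group gens.
Notation Bx := (@Bx_obj R G gens).
Notation sF A := (@s_filt R G gens A).

Context (A B A' : Bx) (i : bx_mod A -> bx_mod B) (f : bx_mod A -> bx_mod A').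
Hypothesis hi : Bx_adm_mono i.
Hypothesis hf : Bx_hom f.

Let hih : Bx_hom i. Proof. by case: hi. Qed.
Let ii : injective i. Proof. by case: hi. Qed.
Let li : linear i. Proof. by case: hih. Qed.
Let lf : linear f. Proof. by case: hf. Qed.

Local Notation M := (bx_mod A' * bx_mod B)%type.

Definition mact g (x : M) : M := (bx_act g x.1, bx_act g x.2).
Lemma mact_action : is_action mact.
Proof.
split.
- move=> g a x y; rewrite /mact /= !(act_lin (bx_actP _)).
  by rewrite [RHS]surjective_pairing.
- by move=> [x y]; rewrite /mact /= !act1 //; apply: bx_actP.
- by move=> g h [x y]; rewrite /mact /= !actM //; apply: bx_actP.
Qed.

Definition jm (a : bx_mod A) : M := (f a, - i a).
Lemma jm_lin : linear jm.
Proof.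
move=> a x y; rewrite /jm lf li [RHS]surjective_pairing /=.
by rewrite opprD scalerN.
Qed.

Definition poN (x : M) : Prop := exists a, jm a = x.
Lemma poN_sub : is_submod poN.
Proof.
split.
- by exists 0; rewrite (lin0 jm_lin).
- by move=> x y [a <-] [a' <-]; exists (a + a'); rewrite (linD _ _ jm_lin).
- by move=> c x [a <-]; exists (c *: a); rewrite (linZ _ _ jm_lin).
Qed.
Lemma poN_act g x : poN x -> poN (mact g x).
Proof.
move=> [a <-]; exists (bx_act g a); rewrite /jm /mact /=.
case: hf => _ ->; case: hih => _ ->; by rewrite (linN _ (act_lin (bx_actP _) g)).
Qed.

Let hN := poN_sub.
Let qa := qact (hN := hN) mact.
Let qaP : is_action qa := qact_action hN mact_action poN_act.
Lemma po_equi g x : qpi hN (mact g x) = qa g (qpi hN x).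
Proof. by rewrite /qa (qactE hN mact_action poN_act). Qed.

Definition inl' (a : bx_mod A') : M := (a, 0).
Definition inr' (b : bx_mod B) : M := (0, b).
Lemma inl_lin : linear inl'.
Proof. by move=> a x y; rewrite /inl' [RHS]surjective_pairing /= scaler0 addr0. Qed.
Lemma inr_lin : linear inr'.
Proof. by move=> a x y; rewrite /inr' [RHS]surjective_pairing /= scaler0 addr0. Qed.
Lemma inl_equi g a : inl' (bx_act g a) = mact g (inl' a).
Proof. by rewrite /inl' /mact /= (lin0 (act_lin (bx_actP _) g)). Qed.
Lemma inr_equi g a : inr' (bx_act g a) = mact g (inr' a).
Proof. by rewrite /inr' /mact /= (lin0 (act_lin (bx_actP _) g)). Qed.

Definition MS := map inl' (bx_gens A') ++ map inr' (bx_gens B).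
Definition QS := map (qpi hN) MS.

Definition FM (S : G -> Prop) (x : M) : Prop := sF A' S x.1 /\ sF B S x.2.

Lemma FM_sub S : is_submod (FM S).
Proof.
case: (@sfilt_submod _ _ _ (bx_act (b:=A')) (bx_gens A') S) => h0 hD hZ.
case: (@sfilt_submod _ _ _ (bx_act (b:=B)) (bx_gens B) S) => h0' hD' hZ'.
split => //.
- by move=> x y [h1 h2] [h3 h4]; split; [apply: hD | apply: hD'].
- by move=> a x [h1 h2]; split; [apply: hZ | apply: hZ'].
Qed.

Lemma MS_FM S x : sfilt mact MS S x -> FM S x.
Proof.
apply: gen_min; first exact: FM_sub.
move=> y [s [sg hsg [hs ->]]]; move: hsg; rewrite mem_cat => /orP [] /mapP [z hz ->].
- split; rewrite /mact /=.
  + exact: sfilt_gen.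
  + rewrite (lin0 (act_lin (bx_actP _) s)); by case: (@sfilt_submod _ _ _ (bx_act (b:=B)) (bx_gens B) S).
- split; rewrite /mact /=.
  + rewrite (lin0 (act_lin (bx_actP _) s)); by case: (@sfilt_submod _ _ _ (bx_act (b:=A')) (bx_gens A') S).
  + exact: sfilt_gen.
Qed.

Lemma FM_MS S x : FM S x -> sfilt mact MS S x.
Proof.
move=> [h1 h2].
have -> : x = inl' x.1 + inr' x.2.
  by rewrite /inl' /inr' [RHS]surjective_pairing /= addr0 add0r -surjective_pairing.
case: (@sfilt_submod _ _ _ mact MS S) => _ hD _; apply: hD.
- apply: (sfilt_sub_gens (S1 := map inl' (bx_gens A'))); first by move=> z hz; rewrite mem_cat hz.
  exact: (sfilt_img (actM := bx_act (b:=A')) mact_action inl_lin inl_equi h1).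
- apply: (sfilt_sub_gens (S1 := map inr' (bx_gens B))); first by move=> z hz; rewrite mem_cat hz orbT.
  exact: (sfilt_img (actM := bx_act (b:=B)) mact_action inr_lin inr_equi h2).
Qed.

Lemma hQ1 S q : sfilt qa QS S q -> exists2 x, FM S x & qpi hN x = q.
Proof.
move=> hq; have [x hx <-] := sfilt_img_inv (actN := qa) mact_action (qpi_lin hN) po_equi hq.
by exists x => //; apply: MS_FM.
Qed.

Lemma hQ2 S x : FM S x -> sfilt qa QS S (qpi hN x).
Proof. by move/FM_MS => h; exact: (sfilt_img (actM := mact) qaP (qpi_lin hN) po_equi h). Qed.

Lemma po_gen : generates_mod qa QS.
Proof.
elim/(@quot_ind R _ _ hN) => x; apply: hQ2; split; exact: bx_gensP.
Qed.

Let cf := proj1_sig (constructive_indefinite_description _ (bx_hom_ctrl hgen hf)).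
Let hcf : forall S m, sF A S m -> sF A' (enlarge gens S cf) (f m).
Proof. by rewrite /cf; case: constructive_indefinite_description. Qed.
Let ci := proj1_sig (constructive_indefinite_description _ (bx_hom_ctrl hgen hih)).
Let hci : forall S m, sF A S m -> sF B (enlarge gens S ci) (i m).
Proof. by rewrite /ci; case: constructive_indefinite_description. Qed.
Let bi := proj1_sig (constructive_indefinite_description _ (let: And3 _ _ b := hi in b)).
Let hbi : forall S n, (exists m, i m = n) -> sF B S n ->
    exists2 m, sF A (enlarge gens S bi) m & i m = n.
Proof. by rewrite /bi; case: constructive_indefinite_description => ? []. Qed.

Lemma hjb S a : sF B S (- i a) -> sF A (enlarge gens S bi) a.
Proof.
move=> h; have h' : sF B S (i a).
  by rewrite -[i a]opprK; apply: (@submodN _ _ (sF B S)) => //; apply: sfilt_submod.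
have [m hm em] := hbi (ex_intro _ a erefl) h'.
by rewrite -(ii em).
Qed.

Lemma po_ins : insular gens (sfilt qa QS).
Proof.
have hA := bx_Bobj hgen A'; have hB := bx_Bobj hgen B.
have hPI := prod_insular (R := R) (gens := gens) (F1 := sF A') (F2 := sF B) fst snd
  (@bx_mono _ _ _ A') (@bx_mono _ _ _ B) (let: And5 _ _ _ ins _ := hA in ins)
  (let: And5 _ _ _ ins _ := hB in ins).
apply: (quot_insular (FM := FM) (actA := bx_act (b:=A)) (SA := bx_gens A)
   (j := jm) (pi := qpi hN) (cA := maxn cf ci) (bA := bi)).
- exact: FM_sub.
- move=> S U hSU x [h1 h2]; split; [exact: (bx_mono hSU h1) | exact: (bx_mono hSU h2)].
- by case: hPI => d hd; exists d.
- exact: sfilt_fmono.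
- exact: jm_lin.
- exact: qpi_lin.
- move=> S a ha; split => /=.
  + by apply: (bx_mono _ (hcf ha)) => w; apply: enl_mono => //; rewrite leq_maxl.
  + apply: (@submodN _ _ (sF B _)); first exact: sfilt_submod.
    by apply: (bx_mono _ (hci ha)) => w; apply: enl_mono => //; rewrite leq_maxr.
- by move=> S a [_ h2]; apply: hjb.
- by move=> x /qpi0.
- by move=> a; apply/qpi0; exists a.
- exact: hQ1.
- exact: hQ2.
Qed.

Definition PO : Bx := mkBx qaP po_gen po_ins.

Definition i' (a : bx_mod A') : bx_mod PO := qpi hN (inl' a).
Definition f' (b : bx_mod B) : bx_mod PO := qpi hN (inr' b).

Lemma i'_hom : Bx_hom (A := A') (B := PO) i'.
Proof.
split; first exact: lin_comp inl_lin (qpi_lin hN).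
by move=> g a; rewrite /i' inl_equi po_equi.
Qed.
Lemma f'_hom : Bx_hom (A := B) (B := PO) f'.
Proof.
split; first exact: lin_comp inr_lin (qpi_lin hN).
by move=> g a; rewrite /f' inr_equi po_equi.
Qed.


Lemma po_comm a : f' (i a) = i' (f a).
Proof.
apply/qpiP; exists (- a); rewrite /jm /inl' /inr' (linN _ lf) (linN _ li) opprK.
by rewrite [RHS]surjective_pairing /= sub0r subr0.
Qed.

Lemma po_pushout : Bx_pushout i f (i' : _ -> bx_mod PO) f'.
Proof.
split; first by split; [exact: i'_hom | exact: f'_hom].
- exact: po_comm.
- move=> X u v [lu hu] [lv hv] huv.
  pose h0 (x : M) : bx_mod X := v x.1 + u x.2.
  have lh0 : linear h0.
    by move=> a x y; rewrite /h0 /= lu lv scalerDr addrACA.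
  have h0N x : poN x -> h0 x = 0.
    by move=> [a <-]; rewrite /h0 /jm /= (linN _ lu) huv subrr.
  pose h (q : bx_mod PO) : bx_mod X := h0 (val q).
  have hE x : h (qpi hN x) = h0 x.
    apply/eqP; rewrite -subr_eq0 /h /= -(linB _ _ lh0); apply/eqP; apply: h0N.
    exact: canon_spec.
  have hh : Bx_hom h.
    split.
    + move=> a; elim/(@quot_ind R _ _ hN) => x; elim/(@quot_ind R _ _ hN) => y.
      by rewrite qpiZ qpiD !hE lh0.
    + move=> g; elim/(@quot_ind R _ _ hN) => x.
      transitivity (h (qpi hN (mact g x))); first by rewrite po_equi.
      rewrite !hE /h0 /mact /= hu hv.
      by rewrite (linD _ _ (act_lin (@bx_actP _ _ _ X) g)).
  exists h; split => //.
  + by move=> b; rewrite /f' hE /h0 /inr' /= (lin0 lv) add0r.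
  + by move=> a; rewrite /i' hE /h0 /inl' /= (lin0 lu) addr0.
  + move=> h' [lh' _] h1 h2; elim/(@quot_ind R _ _ hN) => x.
    have -> : x = inl' x.1 + inr' x.2.
      by rewrite /inl' /inr' [RHS]surjective_pairing /= addr0 add0r -surjective_pairing.
    rewrite -qpiD (linD _ _ lh') -/(i' x.1) -/(f' x.2) h1 h2 qpiD hE.
    by rewrite /h0 /inl' /inr' /= addr0 add0r.
Qed.

Lemma po_mono : Bx_adm_mono (A := A') (B := PO) i'.
Proof.
split; first exact: i'_hom.
- move=> x y /qpiP [a e].
  have e2 : - i a = 0 by move: (congr1 snd e); rewrite /= subrr.
  have ea : a = 0 by apply: ii; rewrite (lin0 li) -[i a]opprK e2 oppr0.
  move: (congr1 fst e); rewrite /= ea (lin0 lf) => /eqP; rewrite eq_sym subr_eq0.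
  by move/eqP.
- have [c hc] := bx_hom_ctrl hgen i'_hom.
  exists (maxn c (bi + cf)); split.
  + move=> S m hm; apply: (bx_mono _ (hc _ _ hm)) => w; apply: enl_mono => //.
    by rewrite leq_maxl.
  + move=> S n [a' <-] hn.
    have [x [hx1 hx2] /qpiP [a ea]] := hQ1 hn.
    exists a'; last by [].
    have e2 : x.2 = - i a by move: (congr1 snd ea); rewrite /= subr0.
    have e1 : a' = x.1 - f a by move: (congr1 fst ea); rewrite /= => ->; rewrite opprB addrC subrK.
    rewrite e2 in hx2; have ha := hjb hx2.
    have hfa := hcf ha.
    rewrite e1; apply: (@submodB _ _ (sF A' _)); first exact: sfilt_submod.
    * by apply: (bx_mono _ hx1) => w hw; apply: enl_self.
    * apply: (bx_mono _ hfa) => w /enl_enl; apply: enl_mono => //.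
      by rewrite leq_maxr.
Qed.

End Pushout.

Local Close Scope ring_scope.

Local Open Scope ring_scope.



Section Final.
Context {R : pzRingType} {G : groupType} (gens : seq G).
Hypothesis hgen : generates_group gens.
Notation Bx := (@Bx_obj R G gens).
Notation sF A := (@s_filt R G gens A).

Lemma hom_comp (A B C : Bx) (f : bx_mod A -> bx_mod B) (g : bx_mod B -> bx_mod C) :
  Bx_hom f -> Bx_hom g -> Bx_hom (g \o f).
Proof.
move=> [lf hf] [lg hg]; split; first exact: lin_comp.
by move=> h m /=; rewrite hf hg.
Qed.

Lemma bbi_id (A : Bx) : bbicontrolled gens (sF A) (sF A) id.
Proof.
exists 0%N; split.
- by move=> S m hm; apply: (bx_mono _ hm) => w; apply: enl_self.
- by move=> S n _ hn; exists n => //; apply: (bx_mono _ hn) => w; apply: enl_self.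
Qed.

Lemma bbi_iso (A B : Bx) (f : bx_mod A -> bx_mod B) : Bx_iso f ->
  bbicontrolled gens (sF A) (sF B) f.
Proof.
move=> [hf [g [hg fK gK]]].
have [cf hcf] := bx_hom_ctrl hgen hf; have [cg hcg] := bx_hom_ctrl hgen hg.
exists (maxn cf cg); split.
- move=> S m hm; apply: (bx_mono _ (hcf _ _ hm)) => w; apply: enl_mono => //.
  by rewrite leq_maxl.
- move=> S n [m <-] hn; exists m => //.
  rewrite -[m]fK; apply: (bx_mono _ (hcg _ _ hn)) => w; apply: enl_mono => //.
  by rewrite leq_maxr.
Qed.

Lemma iso_closure (A B C A' B' C' : Bx) i p i' p' a b c :
  Bx_exact (A:=A) (B:=B) (C:=C) i p ->
  Bx_kercoker (A:=A') (B:=B') (C:=C') i' p' ->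
  Bx_iso a -> Bx_iso b -> Bx_iso c ->
  (forall x, b (i x) = i' (a x)) -> (forall y, c (p y) = p' (b y)) ->
  Bx_exact i' p'.
Proof.
move=> hex [hi' hp' _ _] ha hb hc hbi hcp.
have [hi hp ii sp [ex bi bp]] := Bx_exact_facts hgen hex.
case: (ha) => hah [ai [hai aK aiK]].
case: (hb) => hbh [bi' [hbih bK biK]].
case: (hc) => hch [ci [hci cK ciK]].
have lci : linear ci by case: hci.
have ei' : i' = b \o i \o ai.
  by apply: functional_extensionality => x /=; rewrite hbi aiK.
have ep' : p' = c \o p \o bi'.
  by apply: functional_extensionality => y /=; rewrite hcp biK.
have bai : Bx_iso ai by split => //; exists a.
have bbi : Bx_iso bi' by split => //; exists b.
apply: Bx_exact_of => //.
- rewrite ei' => x y /= /(can_inj bK) /ii /(can_inj aiK) //.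
- move=> z; have [y hy] := sp (ci z); exists (b y).
  by rewrite -hcp hy ciK.
- move=> y; rewrite ep' /=; split.
  + move=> h; have : p (bi' y) = 0 by rewrite -[p _]cK h (lin0 lci).
    by case/ex => x hx; exists (a x); rewrite -(hbi x) hx biK.
  + move=> [x <-]; rewrite -{1}(aiK x) -hbi bK.
    have -> : p (i (ai x)) = 0 by apply/ex; exists (ai x).
    by case: hch => lc _; rewrite (lin0 lc).
- rewrite ei'; apply: (bbi_comp (F2 := sF B)); [exact: bx_mono | exact: bx_mono | | | exact: bbi_iso hb].
  + by move=> y [x e]; exists x; apply: (can_inj bK).
  + apply: (bbi_comp (F2 := sF A)); [exact: bx_mono | exact: bx_mono | | exact: bbi_iso bai | exact: bi].
    by move=> y [x /ii e]; exists x.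
- rewrite ep'; apply: (bbi_comp (F2 := sF C)); [exact: bx_mono | exact: bx_mono | | | exact: bbi_iso hc].
  + by move=> y _; have [z <-] := sp y; exists (b z); rewrite /= bK.
  + apply: (bbi_comp (F2 := sF B)); [exact: bx_mono | exact: bx_mono | | exact: bbi_iso bbi | exact: bp].
    by move=> y _; exists (b y); rewrite bK.
Qed.


Lemma adm_mono_id (A : Bx) : Bx_adm_mono (A := A) (B := A) id.
Proof. by split; [split | move=> x y | exact: bbi_id]. Qed.

Lemma E0_epi (A : Bx) : E_epi (B := A) (C := A) id.
Proof.
apply: (admepi_Eepi hgen).
pose Z := cokerBx hgen (adm_mono_id A).
have hz : forall q : bx_mod Z, q = 0.
  by move=> q; rewrite -(qpi_val q); apply/qpi0; exists (val q).
have h0 : Bx_hom (A := Z) (B := A) (fun _ => 0).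
  split; first by move=> a x y; rewrite scaler0 addr0.
  by move=> g m; rewrite (lin0 (act_lin (@bx_actP _ _ _ A) g)).
apply: (adm_epi_of hgen h0).
- by split.
- by move=> x y _; rewrite (hz x) (hz y).
- by move=> c; exists c.
- move=> b; split; last by case=> z <-.
  by move=> ->; exists 0.
- exists 0%N; split.
  + by move=> S m _; case: (@sfilt_submod _ _ _ (bx_act (b:=A)) (bx_gens A) (enlarge gens S 0)).
  + move=> S n [m <-] _; exists 0 => //.
    by case: (@sfilt_submod _ _ _ (bx_act (b:=Z)) (bx_gens Z) (enlarge gens S 0)).
- exact: bbi_id.
Qed.

Lemma E1_mono (A B C : Bx) (i : bx_mod A -> bx_mod B) (j : bx_mod B -> bx_mod C) :
  E_mono i -> E_mono j -> E_mono (j \o i).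
Proof.
move=> [C1 [p1 [_ [hi ii bi] _]]] [C2 [p2 [_ [hj ij bj] _]]].
apply: (admmono_Emono hgen); split.
- exact: hom_comp.
- exact: inj_comp.
- apply: (bbi_comp (F2 := sF B)) => //; [exact: bx_mono | exact: bx_mono |].
  by move=> y [x /ij e]; exists x.
Qed.

Lemma E1_epi (A B C : Bx) (p : bx_mod A -> bx_mod B) (q : bx_mod B -> bx_mod C) :
  E_epi p -> E_epi q -> E_epi (q \o p).
Proof.
move=> [K1 [i1 hex1]] [K2 [i2 hex2]].
have [hi1 hp ii1 sp [ex1 bi1 bp]] := Bx_exact_facts hgen hex1.
have [hi2 hq ii2 sq [ex2 bi2 bq]] := Bx_exact_facts hgen hex2.
apply: (admepi_Eepi hgen).
pose P := PB hgen hex1 hi2.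
pose fs := @fstv _ _ gens hgen A B K2 K1 p i1 i2 hex1 hi2.
have hf : Bx_hom (A := P) (B := A) fs := pb_fst_hom hgen hex1 hi2.
apply: (adm_epi_of hgen hf (hom_comp hp hq)).
- move=> x y e.
  have e2 : i2 (sndv x) = i2 (sndv y) by rewrite -!pb_comm; congr p; exact: e.
  apply: val_inj; rewrite [LHS]surjective_pairing [RHS]surjective_pairing.
  by congr pair; [exact: e | exact: ii2].
- by move=> c; have [b <-] := sq c; have [a <-] := sp b; exists a.
- move=> a; split.
  + move=> /= /ex2 [k hk].
    have hpb : pbP p i2 (a, k) by apply/eqP.
    by exists (mkPB hgen hex1 hi2 hpb).
  + by move=> [x <-] /=; rewrite pb_comm; apply/ex2; exists (sndv x).
- have [kf hkf] := bx_hom_ctrl hgen hf.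
  have [cp hcp] := bx_hom_ctrl hgen hp.
  have [k hk] := pb_fle2_ex hgen hex1 hi2.
  case: (bi2) => b2 [_ hb2].
  exists (maxn kf (cp + b2 + k)); split.
  + move=> S m hm; apply: (bx_mono _ (hkf _ _ hm)) => w; apply: enl_mono => //.
    by rewrite leq_maxl.
  + move=> S n [x <-] hn; exists x => //.
    have h1 := hcp _ _ hn; rewrite pb_comm in h1.
    have [m hm em] := hb2 _ _ (ex_intro _ _ erefl) h1.
    have e : m = sndv x by apply: ii2.
    subst m.
    have ha : sF A (enlarge gens S (cp + b2)%N) (fstv x).
      by apply: (bx_mono _ hn) => w hw; apply: enl_self.
    have hb : sF K2 (enlarge gens S (cp + b2)%N) (sndv x).
      by apply: (bx_mono _ hm) => w; apply: enl_enl.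
    apply: (bx_mono _ (hk _ x ha hb)) => w /enl_enl; apply: enl_mono => //.
    by rewrite leq_maxr.
- apply: (bbi_comp (F2 := sF B) (@bx_mono _ _ _ A) (@bx_mono _ _ _ C) _ bp bq).
  by move=> y _; have [x <-] := sp y; exists x.
Qed.

Lemma exact_structure : @Bx_exact_structure R G gens.
Proof.
split.
- move=> A B C A' B' C' i p i' p' a b c; exact: iso_closure.
- split; [exact: admmono_Emono | exact: admepi_Eepi].
- by move=> A; split; [apply: (admmono_Emono hgen); exact: adm_mono_id | exact: E0_epi].
- split; [exact: E1_mono | exact: E1_epi].
- split.
  + move=> A B A' i f [C [p [_ hi _]]] hf.
    exists (PO hgen hi hf), (i' hgen hi hf), (f' hgen hi hf); split.
    * exact: po_pushout.
    * exact: (admmono_Emono hgen (po_mono hgen hi hf)).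
  + move=> A C C' p f [K [i hex]] hf.
    exists (PB hgen hex hf), (@sndv _ _ gens hgen A C C' K p i f hex hf), (@fstv _ _ gens hgen A C C' K p i f hex hf); split.
    * exact: pb_pullback.
    * exact: pb_Eepi.
Qed.

End Final.

Local Close Scope ring_scope.

Unset Implicit Arguments.

Theorem proposition2p10 (R : pzRingType) (G : groupType) (gens : seq G) :
  noetherian R -> generates_group gens ->
  [/\ @Bx_exact_structure R G gens, @s_exact R G gens & @sGamma_exact R G gens].
Proof.
move=> _ hgen; split.
- exact: (exact_structure hgen).
- exact: (s_exact_thm hgen).
- exact: (sGamma_exact_thm hgen).
Qed.
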